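(* Let $B=\begin{pmatrix}0&1\\1&0\end{pmatrix}$, let $P\in(C^1[0,\infty))^{2\times2}$ be complex-valued, and let $Q$ be a $2\times2$ complex matrix with $QB+BQ=B$ and $Q^2=Q$. For $\lambda\in\mathbb{C}$ let $\varphi,\widetilde\varphi$ be the $2\times2$ matrix solutions of $$B\varphi'(x)+P(x)\varphi(x)=\lambda\varphi(x),\ \varphi(0)=Q;\qquad -\widetilde\varphi'(x)B+\widetilde\varphi(x)P(x)=\lambda\widetilde\varphi(x),\ \widetilde\varphi(0)=Q\qquad(0<x<\infty),$$ and let $S,\widetilde S$ be the corresponding solutions with $P$ replaced by $0$. Then for $\rho\in\mathbb{R}$ and $x\ge0$: (1) $S(x,i\rho)=R(P,0)(x)\varphi(x,i\rho)+\int_0^xK(P,0;Q)(x,y)\varphi(y,i\rho)\,dy$, where $K(P,0;Q)\in(C^1(\overline\Omega))^{2\times2}$ satisfies $$BK_x(P,0;Q)(x,y)+K_y(P,0;Q)(x,y)B-K(P,0;Q)(x,y)P(y)=0\ \ ((x,y)\in\Omega),$$ and, for $0\le x<\infty$, $K(P,0;Q)(x,0)Q=K(P,0;Q)(x,0)$ and $K(P,0;Q)(x,x)B-BK(P,0;Q)(x,x)=BR'(P,0)(x)-R(P,0)(x)P(x)$; (2) $\widetilde S(x,i\rho)=\widetilde\varphi(x,i\rho)R(0,P)(x)+\int_0^x\widetilde\varphi(y,i\rho)\overline{K^T(-\overline{P^T},0;\overline{Q^T})(x,y)}\,dy$, where $Q\,\overline{K^T(-\overline{P^T},0;\overline{Q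^T})(x,0)}=\overline{K^T(-\overline{P^T},0;\overline{Q^T})(x,0)}$.
   Context: $\overline{\cdot}$ is complex conjugation, $\cdot^T$ transpose, $i=\sqrt{-1}$, $\Omega=\{(x,y)\in\mathbb{R}^2:0<y<x\}$. For complex-valued $P_1,P_2\in(C^1[0,\infty))^{2\times2}$ with entries $P_{j,kl}$, define $\theta_1(x)=\frac12\int_0^x(P_{2,12}+P_{2,21}-P_{1,12}-P_{1,21})(s)ds$, $\theta_2(x)=\frac12\int_0^x(P_{2,11}+P_{2,22}-P_{1,11}-P_{1,22})(s)ds$ and $R(P_1,P_2)(x)=e^{-\theta_1(x)}\begin{pmatrix}\cosh\theta_2&-\sinh\theta_2\\-\sinh\theta_2&\cosh\theta_2\end{pmatrix}(x)$. For a $2\times2$ matrix $M$ with $\det M=0$, $K(P_1,P_2;M)$ denotes the unique $K\in(C^1(\overline\Omega))^{2\times2}$ solving $BK_x(x,y)+K_y(x,y)B+P_2(x)K(x,y)-K(x,y)P_1(y)=0$ on $\Omega$, $K(x,0)BM=0$ and $K(x,x)B-BK(x,x)=BR(P_1,P_2)'(x)+P_2(x)R(P_1,P_2)(x)-R(P_1,P_2)(x)P_1(x)$ for $x\ge0$ (such a unique solution exists). *)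

(* Defs.v *)
From Stdlib Require Import Reals.
From Coquelicot Require Import Coquelicot.
From Stdlib Require Import List.
Open Scope R_scope.

Definition cexp (z : C) : C :=
  (exp (Re z) * cos (Im z), exp (Re z) * sin (Im z)).
Definition ccosh (z : C) : C := Cmult (RtoC (/2)) (Cplus (cexp z) (cexp (Copp z))).
Definition csinh (z : C) : C := Cmult (RtoC (/2)) (Cminus (cexp z) (cexp (Copp z))).

Definition cint (f : R -> C) (a b : R) : C :=
  @RInt C_R_CompleteNormedModule f a b.

(* derivative of f : R -> C at x, computed within [0, oo)
   (two-sided for x > 0, right derivative at x = 0) *)
Definition cderiv0 (f : R -> C) (x : R) (D : C) : Prop :=
  filterlim (fun y => Cmult (RtoC (/ (y - x))) (Cminus (f y) (f x)))
    (within (fun y => 0 <= y /\ y <> x) (locally x)) (locally D).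

Definition cderiv (f : R -> C) (x : R) (D : C) : Prop :=
  filterlim (fun y => Cmult (RtoC (/ (y - x))) (Cminus (f y) (f x)))
    (within (fun y => y <> x) (locally x)) (locally D).

Record M2 := mkM2 { m11 : C; m12 : C; m21 : C; m22 : C }.

Definition madd (A B : M2) : M2 :=
  (mkM2 (m11 A + m11 B) (m12 A + m12 B) (m21 A + m21 B) (m22 A + m22 B))%C.
Definition mopp (A : M2) : M2 :=
  (mkM2 (- m11 A) (- m12 A) (- m21 A) (- m22 A))%C.
Definition msub (A B : M2) : M2 := madd A (mopp B).
Definition mmul (A B : M2) : M2 :=
  (mkM2 (m11 A * m11 B + m12 A * m21 B) (m11 A * m12 B + m12 A * m22 B)
       (m21 A * m11 B + m22 A * m21 B) (m21 A * m12 B + m22 A * m22 B))%C.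
Definition mscal (c : C) (A : M2) : M2 :=
  (mkM2 (c * m11 A) (c * m12 A) (c * m21 A) (c * m22 A))%C.
Definition mzero : M2 := (mkM2 0 0 0 0)%C.
Definition mconj (A : M2) : M2 :=
  mkM2 (Cconj (m11 A)) (Cconj (m12 A)) (Cconj (m21 A)) (Cconj (m22 A)).
Definition mtr (A : M2) : M2 := mkM2 (m11 A) (m21 A) (m12 A) (m22 A).

Definition Bm : M2 := (mkM2 0 1 1 0)%C.

Definition mint (f : R -> M2) (a b : R) : M2 :=
  mkM2 (cint (fun s => m11 (f s)) a b) (cint (fun s => m12 (f s)) a b)
       (cint (fun s => m21 (f s)) a b) (cint (fun s => m22 (f s)) a b).

Definition entries : list (M2 -> C) := m11 :: m12 :: m21 :: m22 :: nil.

Definition mderiv0 (f : R -> M2) (x : R) (D : M2) : Prop :=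
  forall e, In e entries -> cderiv0 (fun s => e (f s)) x (e D).
Definition mderiv (f : R -> M2) (x : R) (D : M2) : Prop :=
  forall e, In e entries -> cderiv (fun s => e (f s)) x (e D).

Definition mcont0 (f : R -> M2) (x : R) : Prop :=
  forall e, In e entries ->
    filterlim (fun s => e (f s)) (within (fun y => 0 <= y) (locally x)) (locally (e (f x))).

Definition C1_nonneg (P : R -> M2) : Prop :=
  exists dP : R -> M2,
    (forall x, 0 <= x -> mderiv0 P x (dP x)) /\
    (forall x, 0 <= x -> mcont0 dP x).

Definition Omega (p : R * R) : Prop := 0 < snd p < fst p.
Definition Omega_bar (p : R * R) : Prop := 0 <= snd p <= fst p.

Definition mcont_Obar (K : R -> R -> M2) (x y : R) : Prop :=
  forall e, In e entries ->
    filterlim (fun p : R * R => e (K (fst p) (snd p)))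
      (within Omega_bar (locally (x, y))) (locally (e (K x y))).

Definition theta1 (P1 P2 : R -> M2) (x : R) : C :=
  Cmult (RtoC (/2)) (cint (fun s => (m12 (P2 s) + m21 (P2 s) - m12 (P1 s) - m21 (P1 s))%C) 0 x).
Definition theta2 (P1 P2 : R -> M2) (x : R) : C :=
  Cmult (RtoC (/2)) (cint (fun s => (m11 (P2 s) + m22 (P2 s) - m11 (P1 s) - m22 (P1 s))%C) 0 x).

Definition Rmat (P1 P2 : R -> M2) (x : R) : M2 :=
  let t1 := theta1 P1 P2 x in let t2 := theta2 P1 P2 x in
  mscal (cexp (Copp t1))
    (mkM2 (ccosh t2) (Copp (csinh t2)) (Copp (csinh t2)) (ccosh t2)).

(** * The kernel K(P1,P2;M): characterization of the (unique) solution. *)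
Definition is_kernel (P1 P2 : R -> M2) (M : M2) (K : R -> R -> M2) : Prop :=
  (exists Kx Ky : R -> R -> M2,
     (forall x y, Omega_bar (x, y) ->
        mcont_Obar K x y /\ mcont_Obar Kx x y /\ mcont_Obar Ky x y) /\
     (forall x y, Omega (x, y) ->
        mderiv (fun t => K t y) x (Kx x y) /\ mderiv (fun s => K x s) y (Ky x y)) /\
     (forall x y, Omega (x, y) ->
        madd (madd (mmul Bm (Kx x y)) (mmul (Ky x y) Bm))
             (msub (mmul (P2 x) (K x y)) (mmul (K x y) (P1 y))) = mzero)) /\
  (forall x, 0 <= x -> mmul (mmul (K x 0) Bm) M = mzero) /\
  (forall x, 0 <= x -> forall dR, mderiv0 (Rmat P1 P2) x dR ->
     msub (mmul (K x x) Bm) (mmul Bm (K x x)) =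
     msub (madd (mmul Bm dR) (mmul (P2 x) (Rmat P1 P2 x))) (mmul (Rmat P1 P2 x) (P1 x))).

Definition is_sol (P : R -> M2) (Q : M2) (lam : C) (f : R -> M2) : Prop :=
  f 0 = Q /\ (forall x, 0 <= x -> mcont0 f x) /\
  (forall x, 0 < x -> exists D, mderiv0 f x D /\
     madd (mmul Bm D) (mmul (P x) (f x)) = mscal lam (f x)).

Definition is_sol_tilde (P : R -> M2) (Q : M2) (lam : C) (f : R -> M2) : Prop :=
  f 0 = Q /\ (forall x, 0 <= x -> mcont0 f x) /\
  (forall x, 0 < x -> exists D, mderiv0 f x D /\
     madd (mopp (mmul D Bm)) (mmul (f x) (P x)) = mscal lam (f x)).

Definition Pzero : R -> M2 := fun _ => mzero.

(* Main.v *)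
Require Import Defs.
From Stdlib Require Import Reals Lra List FunctionalExtensionality.
From Coquelicot Require Import Coquelicot.
Open Scope R_scope.

Lemma cont_of_derive (f : R -> R) x l : is_derive f x l -> continuity_pt f x.
Proof.
  intros H. apply continuity_pt_filterlim. apply (ex_derive_continuous f x).
  exists l; exact H.
Qed.

Lemma const_on (G : R -> R) a b : a < b ->
  (forall t, a < t < b -> is_derive G t 0) ->
  continuity_pt G a -> continuity_pt G b -> G a = G b.
Proof.
  intros Hab Hd Ha Hb.
  destruct (MVT_gen G a b (fun _ => 0)) as [c [_ Hc]].
  - intros t Ht. rewrite Rmin_left in Ht by lra. rewrite Rmax_right in Ht by lra. auto.
  - intros t Ht. rewrite Rmin_left in Ht by lra. rewrite Rmax_right in Ht by lra.
    destruct (Req_dec t a) as [->|Hta]; auto.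
    destruct (Req_dec t b) as [->|Htb]; auto.
    apply (cont_of_derive _ _ 0); apply Hd; lra.
  - lra.
Qed.

Definition RInt_correctR := @RInt_correct R_CompleteNormedModule.
Definition is_RInt_uniqueR := @is_RInt_unique R_CompleteNormedModule.

Lemma ballR (x e y : R) : ball x e y <-> Rabs (y - x) < e.
Proof. reflexivity. Qed.

Lemma cont_ex_RInt (f : R -> R) a b : (forall t, continuity_pt f t) -> ex_RInt f a b.
Proof.
  intros H. apply (@ex_RInt_continuous R_CompleteNormedModule). intros z _. apply continuity_pt_filterlim. apply H.
Qed.

Lemma ftc_open (h dh : R -> R) a b : a < b ->
  (forall t, a < t < b -> is_derive h t (dh t)) ->
  (forall t, continuity_pt dh t) ->
  continuity_pt h a -> continuity_pt h b ->
  is_RInt dh a b (h b - h a).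
Proof.
  intros Hab Hd Hc Ha Hb.
  set (G := fun t => RInt dh a t - h t).
  assert (HdI : forall t, is_derive (fun t => RInt dh a t) t (dh t)).
  { intros t. apply (is_derive_RInt dh (fun t => RInt dh a t) a t).
    - apply filter_forall. intros u. apply RInt_correctR. apply cont_ex_RInt. auto.
    - apply continuity_pt_filterlim. apply Hc. }
  assert (HG : G a = G b).
  { apply const_on; auto.
    - intros t Ht. unfold G.
      replace 0 with (dh t - dh t) by ring.
      apply (is_derive_minus (fun t => RInt dh a t) h); auto.
    - unfold G. apply continuity_pt_minus; auto. apply (cont_of_derive _ _ (dh a)); auto.
    - unfold G. apply continuity_pt_minus; auto. apply (cont_of_derive _ _ (dh b)); auto. }
  unfold G in HG. rewrite RInt_point in HG.
  replace (h b - h a) with (RInt dh a b).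
  - apply RInt_correctR, cont_ex_RInt; auto.
  - change (zero : R) with 0 in HG. lra.
Qed.

Lemma loc_gt (t c : R) : c < t -> locally t (fun u => c < u).
Proof.
  intros H. assert (Hp : 0 < t - c) by lra. exists (mkposreal _ Hp).
  intros u Hu. rewrite ballR in Hu. simpl in Hu.
  destruct (Rabs_def2 _ _ Hu). lra.
Qed.

Lemma loc_lt (t c : R) : t < c -> locally t (fun u => u < c).
Proof.
  intros H. assert (Hp : 0 < c - t) by lra. exists (mkposreal _ Hp).
  intros u Hu. rewrite ballR in Hu. simpl in Hu.
  destruct (Rabs_def2 _ _ Hu). lra.
Qed.

Lemma max0_loc (f : R -> R) t l : 0 < t -> is_derive f t l -> is_derive (fun u => f (Rmax 0 u)) t l.
Proof.
  intros Ht H. apply (is_derive_ext_loc f); auto.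
  generalize (loc_gt t 0 Ht). apply filter_imp. intros u Hu. rewrite Rmax_right; auto; lra.
Qed.

Lemma is_derive_eq (f : R -> R) x l l' : is_derive f x l -> l = l' -> is_derive f x l'.
Proof. intros H <-; exact H. Qed.

Lemma is_derive_multR (f g : R -> R) x df dg : is_derive f x df -> is_derive g x dg ->
  is_derive (fun u => f u * g u) x (df * g x + f x * dg).
Proof. intros Hf Hg. exact (is_derive_mult f g x df dg Hf Hg (fun n m => Rmult_comm n m)). Qed.

Lemma is_derive_plusR (f g : R -> R) x df dg : is_derive f x df -> is_derive g x dg ->
  is_derive (fun u => f u + g u) x (df + dg).
Proof. intros Hf Hg. exact (is_derive_plus f g x df dg Hf Hg). Qed.

Lemma is_derive_minusR (f g : R -> R) x df dg : is_derive f x df -> is_derive g x dg ->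
  is_derive (fun u => f u - g u) x (df - dg).
Proof. intros Hf Hg. exact (is_derive_minus f g x df dg Hf Hg). Qed.

Lemma energy (a b : R -> R) mu x : 0 < x ->
 (forall t, 0 < t -> is_derive a t (- mu * b t) /\ is_derive b t (mu * a t)) ->
 continuity_pt (fun t => a (Rmax 0 t)) 0 -> continuity_pt (fun t => b (Rmax 0 t)) 0 ->
 a 0 = 0 -> b 0 = 0 -> a x = 0 /\ b x = 0.
Proof.
  intros Hx Hd Ha Hb Ha0 Hb0.
  set (G := fun t => a (Rmax 0 t) * a (Rmax 0 t) + b (Rmax 0 t) * b (Rmax 0 t)).
  assert (HdG : forall t, 0 < t -> is_derive G t 0).
  { intros t Ht. destruct (Hd t Ht) as [Hat Hbt].
    apply (max0_loc (fun u => a u * a u + b u * b u)); auto.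
    eapply is_derive_eq.
    apply (is_derive_plusR (fun u => a u * a u) (fun u => b u * b u)); apply is_derive_multR; eauto.
    match goal with |- ?a = ?b => change (a = b :> R) end. ring. }
  assert (HG : G 0 = G x).
  { apply const_on; auto.
    - intros t Ht; apply HdG; lra.
    - unfold G. apply continuity_pt_plus; apply continuity_pt_mult; auto.
    - apply (cont_of_derive _ _ 0); auto. }
  unfold G in HG. rewrite Rmax_left in HG by lra. rewrite Rmax_right in HG by lra.
  rewrite Ha0, Hb0 in HG. split; nra.
Qed.

Ltac rring := cbv beta; match goal with |- ?a = ?b => change (a = b :> R) end; ring.

Lemma c2_snd (k : R -> R -> R) u v : continuity_2d_pt k u v -> continuity_pt (fun t => k u t) v.
Proof.
  intros H. apply continuity_pt_filterlim. apply filterlim_locally. intros eps.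
  destruct (H eps) as [d Hd]. exists d. intros y Hy. rewrite ballR. apply Hd.
  rewrite Rminus_eq_0, Rabs_R0. apply cond_pos. exact Hy.
Qed.

Lemma c2_fst (k : R -> R -> R) u v : continuity_2d_pt k u v -> continuity_pt (fun t => k t v) u.
Proof.
  intros H. apply continuity_pt_filterlim. apply filterlim_locally. intros eps.
  destruct (H eps) as [d Hd]. exists d. intros y Hy. rewrite ballR. apply Hd.
  exact Hy. rewrite Rminus_eq_0, Rabs_R0. apply cond_pos.
Qed.

Lemma RInt_minusR (f g : R -> R) a b : (forall t, continuity_pt f t) -> (forall t, continuity_pt g t) ->
  RInt (fun t => f t - g t) a b = RInt f a b - RInt g a b.
Proof.
  intros Hf Hg. apply is_RInt_uniqueR.
  apply (is_RInt_minus f g); apply RInt_correctR, cont_ex_RInt; auto.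
Qed.

Lemma RInt_plusR (f g : R -> R) a b : (forall t, continuity_pt f t) -> (forall t, continuity_pt g t) ->
  RInt (fun t => f t + g t) a b = RInt f a b + RInt g a b.
Proof.
  intros Hf Hg. apply is_RInt_uniqueR.
  apply (is_RInt_plus f g); apply RInt_correctR, cont_ex_RInt; auto.
Qed.

Lemma RInt_scalR (f : R -> R) c a b : (forall t, continuity_pt f t) ->
  RInt (fun t => c * f t) a b = c * RInt f a b.
Proof.
  intros Hf. apply is_RInt_uniqueR.
  apply (is_RInt_scal f a b c); apply RInt_correctR, cont_ex_RInt; auto.
Qed.

Lemma RInt_constR c a b : RInt (fun _ => c) a b = (b - a) * c.
Proof. apply is_RInt_uniqueR. apply (is_RInt_const a b c). Qed.

Lemma RInt_ChaslesR (f : R -> R) a b c : (forall t, continuity_pt f t) ->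
  RInt f a b + RInt f b c = RInt f a c.
Proof.
  intros Hf. apply (RInt_Chasles f a b c); apply cont_ex_RInt; auto.
Qed.

Lemma abs_RInt_le_open (f : R -> R) a b M : a < b -> ex_RInt f a b ->
  (forall t, a < t < b -> Rabs (f t) <= M) -> Rabs (RInt f a b) <= (b - a) * M.
Proof.
  intros Hab Hex Hb.
  assert (HM : 0 <= M).
  { eapply Rle_trans; [apply Rabs_pos| apply (Hb ((a+b)/2)); lra]. }
  set (g := fun t => if Rlt_dec a t then if Rlt_dec t b then f t else 0 else 0).
  assert (Hfg : forall t, Rmin a b < t < Rmax a b -> f t = g t).
  { intros t Ht. rewrite Rmin_left, Rmax_right in Ht by lra. unfold g.
    destruct (Rlt_dec a t); [|lra]. destruct (Rlt_dec t b); [|lra]. reflexivity. }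
  rewrite (RInt_ext f g) by auto.
  apply abs_RInt_le_const. lra.
  - destruct Hex as [l Hl]. exists l. apply (is_RInt_ext f); auto.
  - intros t Ht. unfold g. destruct (Rlt_dec a t); destruct (Rlt_dec t b);
      try (rewrite Rabs_R0; exact HM). apply Hb; lra.
Qed.

Lemma cont_scal (f : R -> R) c t : continuity_pt f t -> continuity_pt (fun u => c * f u) t.
Proof. intros H. apply (continuity_pt_scal f c t H). Qed.

Lemma leibniz (k kx : R -> R -> R) (x : R) :
  0 < x ->
  (forall u v, continuity_2d_pt k u v) ->
  (forall u v, continuity_2d_pt kx u v) ->
  (forall u y, 0 < y < u -> is_derive (fun t => k t y) u (kx u y)) ->
  is_derive (fun u => RInt (k u) 0 u) x (k x x + RInt (kx x) 0 x).
Proof.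
  intros Hx Hk Hkx Hd.
  apply is_derive_Reals. intros eps Heps.
  assert (He8 : 0 < eps / 8) by lra.
  destruct (Hk x x (mkposreal _ He8)) as [d1 Hd1].
  assert (Hx8 : 0 < eps / (16 * x)) by (apply Rdiv_lt_0_compat; lra).
  destruct (uniform_continuity_2d kx 0 (2*x) 0 (2*x) (fun u v _ _ => Hkx u v) (mkposreal _ Hx8)) as [d2 Hd2].
  destruct (Hkx x x (mkposreal 1 Rlt_0_1)) as [d3 Hd3].
  set (Mx := Rabs (kx x x) + 1).
  assert (HMx : 0 < Mx) by (unfold Mx; generalize (Rabs_pos (kx x x)); lra).
  assert (Hd4 : 0 < eps / (8 * Mx)) by (apply Rdiv_lt_0_compat; lra).
  assert (Hx2 : 0 < x / 2) by lra.
  set (d := Rmin (Rmin (x/2) d1) (Rmin (Rmin d2 d3) (eps / (8 * Mx)))).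
  assert (Hdpos : 0 < d).
  { unfold d. repeat apply Rmin_pos; auto; apply cond_pos. }
  exists (mkposreal d Hdpos). intros h Hh0 Hh. simpl in Hh.
  assert (Hhd1 : Rabs h < d1) by (eapply Rlt_le_trans; [exact Hh|]; unfold d;
    eapply Rle_trans; [apply Rmin_l|apply Rmin_r]).
  assert (Hhx : Rabs h < x/2) by (eapply Rlt_le_trans; [exact Hh|]; unfold d;
    eapply Rle_trans; [apply Rmin_l|apply Rmin_l]).
  assert (Hhd2 : Rabs h < d2) by (eapply Rlt_le_trans; [exact Hh|]; unfold d;
    eapply Rle_trans; [apply Rmin_r|]; eapply Rle_trans; [apply Rmin_l|apply Rmin_l]).
  assert (Hhd3 : Rabs h < d3) by (eapply Rlt_le_trans; [exact Hh|]; unfold d;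
    eapply Rle_trans; [apply Rmin_r|]; eapply Rle_trans; [apply Rmin_l|apply Rmin_r]).
  assert (Hhd4 : Rabs h < eps / (8 * Mx)) by (eapply Rlt_le_trans; [exact Hh|]; unfold d;
    eapply Rle_trans; [apply Rmin_r|apply Rmin_r]).
  assert (Habsh : 0 < Rabs h) by (apply Rabs_pos_lt; auto).
  destruct (Rabs_def2 _ _ Hhx) as [Hhx1 Hhx2].
  set (m := Rmin x (x + h)).
  assert (Hm1 : x / 2 < m) by (unfold m; apply Rmin_glb_lt; lra).
  assert (Hm2 : m <= x) by (unfold m; apply Rmin_l).
  assert (Hm3 : m <= x + h) by (unfold m; apply Rmin_r).
  assert (Hm4 : x - m <= Rabs h) by (unfold m, Rmin; destruct (Rle_dec x (x+h));
    [|rewrite Rabs_left by lra]; generalize (Rabs_pos h); lra).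
  assert (Hm5 : x + h - m <= Rabs h) by (unfold m, Rmin; destruct (Rle_dec x (x+h));
    [rewrite Rabs_right by lra|]; generalize (Rabs_pos h); lra).
  assert (Ck : forall u, forall t, continuity_pt (k u) t) by (intros; apply c2_snd; auto).
  assert (Ckx : forall u, forall t, continuity_pt (kx u) t) by (intros; apply c2_snd; auto).
  set (T1 := RInt (fun y => k (x+h) y - k x x) m (x+h)).
  set (T2 := RInt (fun y => k x y - k x x) m x).
  set (T3 := RInt (fun y => k (x+h) y - k x y - h * kx x y) 0 m).
  set (T4 := RInt (kx x) m x).
  assert (Hdec : RInt (k (x + h)) 0 (x + h) - RInt (k x) 0 x - h * (k x x + RInt (kx x) 0 x)
                 = T1 - T2 + T3 - h * T4).
  { unfold T1, T2, T3, T4.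
    rewrite !RInt_minusR; auto using continuity_pt_const; try (intros; apply continuity_pt_minus; auto).
    rewrite RInt_scalR; auto.
    rewrite !RInt_constR.
    rewrite <- (RInt_ChaslesR (k (x+h)) 0 m (x+h)) by auto.
    rewrite <- (RInt_ChaslesR (k x) 0 m x) by auto.
    rewrite <- (RInt_ChaslesR (kx x) 0 m x) by auto.
    ring.
    all: intros; try apply cont_scal; try apply continuity_pt_minus; try apply continuity_pt_minus; auto.
    all: apply continuity_pt_const; intros ? ?; reflexivity. }
  assert (B1 : Rabs T1 <= Rabs h * (eps / 8)).
  { eapply Rle_trans. apply abs_RInt_le_const. lra.
    apply cont_ex_RInt; intros; apply continuity_pt_minus; auto; apply continuity_pt_const; intros ?; auto.
    intros t Ht. left. apply Hd1. simpl. replace (x + h - x) with h by ring. auto.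
    destruct (Rabs_def2 _ _ Hhd1). apply Rabs_def1; lra.
    apply Rmult_le_compat_r; lra. }
  assert (B2 : Rabs T2 <= Rabs h * (eps / 8)).
  { eapply Rle_trans. apply abs_RInt_le_const. lra.
    apply cont_ex_RInt; intros; apply continuity_pt_minus; auto; apply continuity_pt_const; intros ?; auto.
    intros t Ht. left. apply Hd1. simpl. rewrite Rminus_eq_0, Rabs_R0. apply cond_pos.
    destruct (Rabs_def2 _ _ Hhd1). apply Rabs_def1; lra.
    apply Rmult_le_compat_r; lra. }
  assert (B3 : Rabs T3 <= m * (Rabs h * (eps / (16 * x)))).
  { replace m with (m - 0) by ring. apply abs_RInt_le_open. lra.
    apply cont_ex_RInt; intros; repeat apply continuity_pt_minus; auto.
    apply continuity_pt_scal; auto.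
    intros y Hy.
    destruct (MVT_gen (fun t => k t y) x (x + h) (fun t => kx t y)) as [c [Hc Hc2]].
    - intros t Ht. apply Hd. split. lra. unfold m in Hy.
      destruct (Rle_dec x (x+h)).
      + rewrite Rmin_left in Ht by lra. rewrite Rmin_left in Hy by lra. lra.
      + rewrite Rmin_right in Ht by lra. rewrite Rmin_right in Hy by lra. lra.
    - intros t _. apply c2_fst. auto.
    - simpl in Hc2. rewrite Hc2. replace (x + h - x) with h by ring.
      replace (kx c y * h - h * kx x y) with (h * (kx c y - kx x y)) by ring.
      rewrite Rabs_mult. apply Rmult_le_compat_l. apply Rabs_pos. left.
      assert (Hcx : Rabs (c - x) <= Rabs h).
      { destruct (Rle_dec x (x+h)).
        - rewrite Rmin_left, Rmax_right in Hc by lra. rewrite Rabs_right by lra. rewrite Rabs_right by lra. lra.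
        - rewrite Rmin_right, Rmax_left in Hc by lra. rewrite Rabs_left1 by lra. rewrite Rabs_left by lra. lra. }
      apply (Hd2 x y c y).
      + lra.
      + lra.
      + destruct (Rle_dec x (x+h)); [rewrite Rmin_left, Rmax_right in Hc by lra | rewrite Rmin_right, Rmax_left in Hc by lra]; lra.
      + lra.
      + simpl. lra.
      + rewrite Rminus_eq_0, Rabs_R0. apply cond_pos. }
  assert (B4 : Rabs T4 <= Rabs h * Mx).
  { eapply Rle_trans. apply abs_RInt_le_const with (M := Mx). auto. apply cont_ex_RInt; auto.
    intros t Ht. 
    assert (Hq : Rabs (kx x t - kx x x) < 1).
    { apply (Hd3 x t). rewrite Rminus_eq_0, Rabs_R0. apply cond_pos.
      generalize (cond_pos d3); intros. apply Rabs_def1; lra. }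
    change (Rabs (kx x t - kx x x) < 1) in Hq. unfold Mx. generalize (Rabs_triang_inv (kx x t) (kx x x)). lra.
    apply Rmult_le_compat_r; lra. }
  replace ((RInt (k (x + h)) 0 (x + h) - RInt (k x) 0 x) / h - (k x x + RInt (kx x) 0 x))
    with ((T1 - T2 + T3 - h * T4) / h) by (rewrite <- Hdec; match goal with |- ?a = ?b => change (a = b :> R) end; field; auto).
  unfold Rdiv. rewrite Rabs_mult, Rabs_inv.
  apply (Rmult_lt_reg_r (Rabs h)); auto.
  rewrite Rmult_assoc, Rinv_l, Rmult_1_r by lra.
  eapply Rle_lt_trans.
  { eapply Rle_trans. apply Rabs_triang. apply Rplus_le_compat_r.
    eapply Rle_trans. apply Rabs_triang. apply Rplus_le_compat_r.
    unfold Rminus. eapply Rle_trans. apply Rabs_triang. rewrite Rabs_Ropp. apply Rle_refl. }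
  rewrite Rabs_Ropp, Rabs_mult.
  assert (Hm6 : m * (Rabs h * (eps / (16 * x))) <= Rabs h * (eps / 16)).
  { assert (E : x * (Rabs h * (eps / (16 * x))) = Rabs h * (eps / 16)).
    { field. lra. }
    rewrite <- E.
    apply Rmult_le_compat_r. apply Rmult_le_pos. apply Rabs_pos. lra. lra. }
  assert (Hh4 : Rabs h * (Rabs h * Mx) < Rabs h * (eps / 8)).
  { apply Rmult_lt_compat_l; auto.
    replace (eps / 8) with ((eps / (8 * Mx)) * Mx) by (field; lra).
    apply Rmult_lt_compat_r; auto. }
  assert (Rabs h * Rabs T4 <= Rabs h * (Rabs h * Mx)) by (apply Rmult_le_compat_l; auto; apply Rabs_pos).
  nra.
Qed.

Definition cD (f : R -> C) x (l : C) :=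
  is_derive (fun t => fst (f t)) x (fst l) /\ is_derive (fun t => snd (f t)) x (snd l).

Lemma ballC (z : C) e (w : C) : ball z e w <-> Rabs (fst w - fst z) < e /\ Rabs (snd w - snd z) < e.
Proof. reflexivity. Qed.

Lemma cderiv_cD f x D : cderiv f x D -> cD f x D.
Proof.
  intros H. unfold cderiv in H.
  split; apply is_derive_Reals; intros eps Heps;
  destruct (proj1 (filterlim_locally _ _) H (mkposreal eps Heps)) as [d Hd];
  exists d; intros h Hh0 Hh; specialize (Hd (x+h));
  (assert (Hb : ball x d (x + h)) by (rewrite ballR; replace (x + h - x) with h by ring; exact Hh));
  specialize (Hd Hb); (assert (Hne : x + h <> x) by (intros E; apply Hh0; lra));
  specialize (Hd Hne); rewrite ballC in Hd; destruct Hd as [Hd1 Hd2]; simpl in Hd1, Hd2;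
  replace (x + h - x) with h in Hd1, Hd2 by ring.
  - replace ((fst (f (x + h)) - fst (f x)) / h) with (/ h * (fst (f (x + h)) + - fst (f x)) - 0 * (snd (f (x + h)) + - snd (f x))) by (field; auto). exact Hd1.
  - replace ((snd (f (x + h)) - snd (f x)) / h) with (/ h * (snd (f (x + h)) + - snd (f x)) + 0 * (fst (f (x + h)) + - fst (f x))) by (field; auto). exact Hd2.
Qed.

Ltac rfield := match goal with |- ?a = ?b => change (a = b :> R) end; field.

Lemma cD_cderiv f x D : cD f x D -> cderiv f x D.
Proof.
  intros [H1 H2]. apply is_derive_Reals in H1. apply is_derive_Reals in H2.
  unfold cderiv. apply filterlim_locally. intros [eps Heps].
  destruct (H1 eps Heps) as [d1 Hd1]. destruct (H2 eps Heps) as [d2 Hd2].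
  assert (Hd : 0 < Rmin d1 d2) by (apply Rmin_pos; apply cond_pos).
  exists (mkposreal _ Hd). intros y Hy Hne. change R in y. rewrite ballR in Hy. simpl in Hy.
  assert (Hh0 : y - x <> 0) by lra.
  assert (Hh1 : Rabs (y - x) < d1) by (eapply Rlt_le_trans; [exact Hy|apply Rmin_l]).
  assert (Hh2 : Rabs (y - x) < d2) by (eapply Rlt_le_trans; [exact Hy|apply Rmin_r]).
  specialize (Hd1 (y - x) Hh0 Hh1). specialize (Hd2 (y - x) Hh0 Hh2).
  replace (x + (y - x)) with y in Hd1, Hd2 by ring.
  rewrite ballC. simpl. split.
  - replace (/ (y - x) * (fst (f y) + - fst (f x)) - 0 * (snd (f y) + - snd (f x))) with ((fst (f y) - fst (f x)) / (y - x)) by (rfield; auto). exact Hd1.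
  - replace (/ (y - x) * (snd (f y) + - snd (f x)) + 0 * (fst (f y) + - fst (f x))) with ((snd (f y) - snd (f x)) / (y - x)) by (rfield; auto). exact Hd2.
Qed.

Lemma cderiv_cderiv0 f x D : cderiv f x D -> cderiv0 f x D.
Proof.
  unfold cderiv, cderiv0. intros H. eapply filterlim_filter_le_1; [|exact H].
  intros P [d Hd]. exists d. intros y Hy [_ Hne]. apply Hd; auto.
Qed.

Lemma cderiv0_cderiv f x D : 0 < x -> cderiv0 f x D -> cderiv f x D.
Proof.
  unfold cderiv, cderiv0. intros Hx H. eapply filterlim_filter_le_1; [|exact H].
  intros P [d Hd]. 
  assert (Hd' : 0 < Rmin d x) by (apply Rmin_pos; auto; apply cond_pos).
  exists (mkposreal _ Hd'). intros y Hy Hne. apply Hd.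
  - rewrite ballR in *. simpl in Hy. eapply Rlt_le_trans; [exact Hy|apply Rmin_l].
  - split; auto. rewrite ballR in Hy. simpl in Hy.
    assert (Rabs (y - x) < x) by (eapply Rlt_le_trans; [exact Hy|apply Rmin_r]).
    destruct (Rabs_def2 _ _ H0). lra.
Qed.

Lemma Ceq (a b : C) : fst a = fst b -> snd a = snd b -> a = b.
Proof. destruct a, b; simpl; intros -> ->; reflexivity. Qed.

Lemma cD_eq f x l l' : cD f x l -> l = l' -> cD f x l'.
Proof. intros H <-; exact H. Qed.

Lemma cD_ext_loc f g x l : locally x (fun t => f t = g t) -> cD f x l -> cD g x l.
Proof.
  intros Hl [H1 H2]. split.
  - apply (is_derive_ext_loc (fun t => fst (f t))); auto. eapply filter_imp; [|exact Hl]. intros t ->; auto.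
  - apply (is_derive_ext_loc (fun t => snd (f t))); auto. eapply filter_imp; [|exact Hl]. intros t ->; auto.
Qed.

Lemma cD_const (c : C) x : cD (fun _ => c) x 0%C.
Proof. split; simpl; apply (is_derive_const (K := R_AbsRing) (V := R_NormedModule)). Qed.

Lemma cD_plus f g x a b : cD f x a -> cD g x b -> cD (fun t => f t + g t)%C x (a + b)%C.
Proof.
  intros [H1 H2] [G1 G2]. split; simpl.
  - apply (is_derive_plusR (fun t => fst (f t)) (fun t => fst (g t))); auto.
  - apply (is_derive_plusR (fun t => snd (f t)) (fun t => snd (g t))); auto.
Qed.

Lemma cD_opp f x a : cD f x a -> cD (fun t => - f t)%C x (- a)%C.
Proof.
  intros [H1 H2]. split; simpl.
  - apply (is_derive_opp (fun t => fst (f t))); auto.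
  - apply (is_derive_opp (fun t => snd (f t))); auto.
Qed.

Lemma cD_mult f g x a b : cD f x a -> cD g x b -> cD (fun t => f t * g t)%C x (a * g x + f x * b)%C.
Proof.
  intros [H1 H2] [G1 G2]. split; simpl.
  - eapply is_derive_eq.
    apply (is_derive_minusR (fun t => fst (f t) * fst (g t)) (fun t => snd (f t) * snd (g t)));
      apply is_derive_multR; eauto.
    rring.
  - eapply is_derive_eq.
    apply (is_derive_plusR (fun t => fst (f t) * snd (g t)) (fun t => snd (f t) * fst (g t)));
      apply is_derive_multR; eauto.
    rring.
Qed.

Lemma is_derive_compR (f g : R -> R) x df dg : is_derive g x dg -> is_derive f (g x) df ->
  is_derive (fun t => f (g t)) x (df * dg).
Proof. intros Hg Hf. eapply is_derive_eq. apply (is_derive_comp f g x df dg Hf Hg). apply Rmult_comm. Qed.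

Lemma cD_cexp z x dz : cD z x dz -> cD (fun t => cexp (z t)) x (cexp (z x) * dz)%C.
Proof.
  intros [H1 H2]. unfold cexp, Re, Im. split; simpl.
  - eapply is_derive_eq.
    apply (is_derive_multR (fun t => exp (fst (z t))) (fun t => cos (snd (z t)))).
    apply (is_derive_compR exp (fun t => fst (z t)) x (exp (fst (z x))) (fst dz)); [exact H1 | apply is_derive_exp].
    apply (is_derive_compR cos (fun t => snd (z t)) x (- sin (snd (z x))) (snd dz)); [exact H2 | apply is_derive_cos].
    simpl. rring.
  - eapply is_derive_eq.
    apply (is_derive_multR (fun t => exp (fst (z t))) (fun t => sin (snd (z t)))).
    apply (is_derive_compR exp (fun t => fst (z t)) x (exp (fst (z x))) (fst dz)); [exact H1 | apply is_derive_exp].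
    apply (is_derive_compR sin (fun t => snd (z t)) x (cos (snd (z x))) (snd dz)); [exact H2 | apply is_derive_sin].
    simpl. rring.
Qed.

Lemma M2ext (A B : M2) : m11 A = m11 B -> m12 A = m12 B -> m21 A = m21 B -> m22 A = m22 B -> A = B.
Proof. destruct A, B; simpl; intros -> -> -> ->; reflexivity. Qed.

Ltac meq := apply M2ext; simpl; ring.
Ltac split4 := split; [|split; [|split]].

Definition mD (F : R -> M2) x (L : M2) :=
  cD (fun t => m11 (F t)) x (m11 L) /\ cD (fun t => m12 (F t)) x (m12 L) /\
  cD (fun t => m21 (F t)) x (m21 L) /\ cD (fun t => m22 (F t)) x (m22 L).

Lemma mD_eq F x L L' : mD F x L -> L = L' -> mD F x L'.
Proof. intros H <-; exact H. Qed.

Lemma mD_ext_loc F G x L : locally x (fun t => F t = G t) -> mD F x L -> mD G x L.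
Proof.
  intros Hl (H1 & H2 & H3 & H4).
  split4; (eapply cD_ext_loc; [|eassumption]); (eapply filter_imp; [|exact Hl]); intros t ->; auto.
Qed.

Lemma mD_const A x : mD (fun _ => A) x mzero.
Proof. split4; apply cD_const. Qed.

Lemma mD_add F G x DF DG : mD F x DF -> mD G x DG -> mD (fun t => madd (F t) (G t)) x (madd DF DG).
Proof.
  intros (H1 & H2 & H3 & H4) (G1 & G2 & G3 & G4). split4; simpl; apply cD_plus; auto.
Qed.

Lemma mD_opp F x DF : mD F x DF -> mD (fun t => mopp (F t)) x (mopp DF).
Proof.
  intros (H1 & H2 & H3 & H4). split4; simpl; apply cD_opp; auto.
Qed.

Lemma cD_sum2 f1 g1 f2 g2 x a1 b1 a2 b2 : cD f1 x a1 -> cD g1 x b1 -> cD f2 x a2 -> cD g2 x b2 ->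
  cD (fun t => f1 t * g1 t + f2 t * g2 t)%C x (a1 * g1 x + f1 x * b1 + (a2 * g2 x + f2 x * b2))%C.
Proof. intros. apply cD_plus; apply cD_mult; auto. Qed.

Lemma mD_mul F G x DF DG : mD F x DF -> mD G x DG ->
  mD (fun t => mmul (F t) (G t)) x (madd (mmul DF (G x)) (mmul (F x) DG)).
Proof.
  intros (H1 & H2 & H3 & H4) (G1 & G2 & G3 & G4). split4; simpl;
  (eapply cD_eq; [apply cD_sum2; eassumption|]); cbv beta; ring.
Qed.

Lemma mD_mscal (c : R -> C) F x dc DF : cD c x dc -> mD F x DF ->
  mD (fun t => mscal (c t) (F t)) x (madd (mscal dc (F x)) (mscal (c x) DF)).
Proof.
  intros Hc (H1 & H2 & H3 & H4). split4; simpl; apply cD_mult; auto.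
Qed.

Lemma mD_mk a b c d x da db dc dd : cD a x da -> cD b x db -> cD c x dc -> cD d x dd ->
  mD (fun t => mkM2 (a t) (b t) (c t) (d t)) x (mkM2 da db dc dd).
Proof. intros; split4; simpl; auto. Qed.

Lemma In11 : In m11 entries. Proof. simpl; auto. Qed.
Lemma In12 : In m12 entries. Proof. simpl; auto. Qed.
Lemma In21 : In m21 entries. Proof. simpl; auto. Qed.
Lemma In22 : In m22 entries. Proof. simpl; auto. Qed.

Lemma mderiv_mD F x D : mderiv F x D -> mD F x D.
Proof.
  intros H. split4; apply cderiv_cD; [apply (H _ In11)|apply (H _ In12)|apply (H _ In21)|apply (H _ In22)].
Qed.

Lemma mderiv0_mD F x D : 0 < x -> mderiv0 F x D -> mD F x D.
Proof.
  intros Hx H. split4; apply cderiv_cD; apply cderiv0_cderiv; auto;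
  [apply (H _ In11)|apply (H _ In12)|apply (H _ In21)|apply (H _ In22)].
Qed.

Lemma mD_mderiv0 F x D : mD F x D -> mderiv0 F x D.
Proof.
  intros (H1 & H2 & H3 & H4) e He. simpl in He.
  destruct He as [<-|[<-|[<-|[<-|[]]]]]; apply cderiv_cderiv0, cD_cderiv; auto.
Qed.

Definition cc (f : R -> C) t := continuity_pt (fun s => fst (f s)) t /\ continuity_pt (fun s => snd (f s)) t.
Definition mc (F : R -> M2) t := cc (fun s => m11 (F s)) t /\ cc (fun s => m12 (F s)) t /\
  cc (fun s => m21 (F s)) t /\ cc (fun s => m22 (F s)) t.
Definition cc2 (f : R -> R -> C) u v := continuity_2d_pt (fun a b => fst (f a b)) u v /\
  continuity_2d_pt (fun a b => snd (f a b)) u v.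
Definition mc2 (F : R -> R -> M2) u v := cc2 (fun a b => m11 (F a b)) u v /\ cc2 (fun a b => m12 (F a b)) u v /\
  cc2 (fun a b => m21 (F a b)) u v /\ cc2 (fun a b => m22 (F a b)) u v.

Lemma cont_opp (f : R -> R) t : continuity_pt f t -> continuity_pt (fun s => - f s) t.
Proof. intros H. apply (continuity_pt_opp f t H). Qed.

Lemma cc_const c t : cc (fun _ => c) t.
Proof. split; apply continuity_pt_const; intros ? ?; reflexivity. Qed.

Lemma cc_plus f g t : cc f t -> cc g t -> cc (fun s => f s + g s)%C t.
Proof. intros [F1 F2] [G1 G2]; split; simpl; apply continuity_pt_plus; auto. Qed.

Lemma cc_opp f t : cc f t -> cc (fun s => - f s)%C t.
Proof. intros [F1 F2]; split; simpl; apply cont_opp; auto. Qed.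

Lemma cc_mult f g t : cc f t -> cc g t -> cc (fun s => f s * g s)%C t.
Proof.
  intros [F1 F2] [G1 G2]; split; simpl.
  - apply continuity_pt_minus; apply continuity_pt_mult; auto.
  - apply continuity_pt_plus; apply continuity_pt_mult; auto.
Qed.

Lemma cc_conj f t : cc f t -> cc (fun s => Cconj (f s)) t.
Proof. intros [F1 F2]; split; simpl; auto. apply cont_opp; auto. Qed.

Lemma cc_of_cD f t l : cD f t l -> cc f t.
Proof. intros [H1 H2]; split; eapply cont_of_derive; eauto. Qed.

Lemma mc_of_mD F t L : mD F t L -> mc F t.
Proof. intros (H1&H2&H3&H4); split4; eapply cc_of_cD; eauto. Qed.

Lemma mc_const A t : mc (fun _ => A) t.
Proof. split4; apply cc_const. Qed.

Lemma mc_add F G t : mc F t -> mc G t -> mc (fun s => madd (F s) (G s)) t.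
Proof. intros (F1&F2&F3&F4) (G1&G2&G3&G4); split4; simpl; apply cc_plus; auto. Qed.

Lemma mc_opp F t : mc F t -> mc (fun s => mopp (F s)) t.
Proof. intros (F1&F2&F3&F4); split4; simpl; apply cc_opp; auto. Qed.

Lemma mc_mul F G t : mc F t -> mc G t -> mc (fun s => mmul (F s) (G s)) t.
Proof. intros (F1&F2&F3&F4) (G1&G2&G3&G4); split4; simpl; apply cc_plus; apply cc_mult; auto. Qed.

Lemma mc_mscal c F t : cc c t -> mc F t -> mc (fun s => mscal (c s) (F s)) t.
Proof. intros Hc (F1&F2&F3&F4); split4; simpl; apply cc_mult; auto. Qed.

Lemma mc_conj F t : mc F t -> mc (fun s => mconj (F s)) t.
Proof. intros (F1&F2&F3&F4); split4; simpl; apply cc_conj; auto. Qed.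

Lemma mc_tr F t : mc F t -> mc (fun s => mtr (F s)) t.
Proof. intros (F1&F2&F3&F4); split4; simpl; auto. Qed.

Lemma cc2_plus f g u v : cc2 f u v -> cc2 g u v -> cc2 (fun a b => f a b + g a b)%C u v.
Proof. intros [F1 F2] [G1 G2]; split; simpl; apply continuity_2d_pt_plus; auto. Qed.

Lemma cc2_mult f g u v : cc2 f u v -> cc2 g u v -> cc2 (fun a b => f a b * g a b)%C u v.
Proof.
  intros [F1 F2] [G1 G2]; split; simpl.
  - apply continuity_2d_pt_minus; apply continuity_2d_pt_mult; auto.
  - apply continuity_2d_pt_plus; apply continuity_2d_pt_mult; auto.
Qed.

Lemma cc2_const c u v : cc2 (fun _ _ => c) u v.
Proof. split; apply continuity_2d_pt_const. Qed.

Lemma mc2_mul F G u v : mc2 F u v -> mc2 G u v -> mc2 (fun a b => mmul (F a b) (G a b)) u v.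
Proof. intros (F1&F2&F3&F4) (G1&G2&G3&G4); split4; simpl; apply cc2_plus; apply cc2_mult; auto. Qed.

Lemma mc2_const A u v : mc2 (fun _ _ => A) u v.
Proof. split4; apply cc2_const. Qed.

Lemma cc2_snd_only (f : R -> C) u v : cc f v -> cc2 (fun _ b => f b) u v.
Proof.
  intros [F1 F2]; split; intros eps.
  - destruct (proj1 (continuity_pt_filterlim _ _) F1 _ (locally_ball _ eps)) as [d Hd].
    exists d. intros a b _ Hb. apply Hd. exact Hb.
  - destruct (proj1 (continuity_pt_filterlim _ _) F2 _ (locally_ball _ eps)) as [d Hd].
    exists d. intros a b _ Hb. apply Hd. exact Hb.
Qed.

Lemma mc2_snd_only (F : R -> M2) u v : mc F v -> mc2 (fun _ b => F b) u v.
Proof. intros (F1&F2&F3&F4); split4; apply cc2_snd_only; auto. Qed.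

Lemma cc2_cc_snd f u v : cc2 f u v -> cc (f u) v.
Proof. intros [F1 F2]; split; apply (c2_snd (fun a b => fst (f a b))) || apply (c2_snd (fun a b => snd (f a b))); auto. Qed.

Lemma mc2_mc_snd F u v : mc2 F u v -> mc (F u) v.
Proof.
  intros (F1&F2&F3&F4); split4;
  [apply (cc2_cc_snd (fun a b => m11 (F a b)))|apply (cc2_cc_snd (fun a b => m12 (F a b)))
  |apply (cc2_cc_snd (fun a b => m21 (F a b)))|apply (cc2_cc_snd (fun a b => m22 (F a b)))]; auto.
Qed.

Lemma Rmax_lip2 a b c d : Rabs (Rmax a b - Rmax c d) <= Rmax (Rabs (a - c)) (Rabs (b - d)).
Proof.
  unfold Rmax at 1 2. destruct (Rle_dec a b); destruct (Rle_dec c d);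
  unfold Rabs; repeat destruct Rcase_abs; unfold Rmax; repeat destruct Rle_dec; lra.
Qed.

Lemma Rmax_lip c a b : Rabs (Rmax c a - Rmax c b) <= Rabs (a - b).
Proof.
  eapply Rle_trans. apply Rmax_lip2. rewrite Rminus_eq_0, Rabs_R0.
  apply Rmax_lub; [apply Rabs_pos|apply Rle_refl].
Qed.


Lemma within0_cc (h : R -> C) x : 0 <= x ->
  filterlim h (within (fun y => 0 <= y) (locally x)) (locally (h x)) -> cc (fun t => h (Rmax 0 t)) x.
Proof.
  intros Hx H.
  assert (Key : forall eps : posreal, exists d : posreal, forall t, Rabs (t - x) < d ->
            Rabs (fst (h (Rmax 0 t)) - fst (h x)) < eps /\ Rabs (snd (h (Rmax 0 t)) - snd (h x)) < eps).
  { intros eps. destruct (proj1 (filterlim_locally _ _) H eps) as [d Hd].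
    exists d. intros t Ht. apply ballC. apply Hd.
    - rewrite ballR. eapply Rle_lt_trans; [|exact Ht].
      replace x with (Rmax 0 x) at 1 by (apply Rmax_right; lra). apply Rmax_lip.
    - apply Rmax_l. }
  assert (Ex : Rmax 0 x = x) by (apply Rmax_right; lra).
  split; apply continuity_pt_filterlim; apply filterlim_locally; intros eps;
    destruct (Key eps) as [d Hd]; exists d; intros t Ht; rewrite ballR in *; rewrite Ex; apply Hd; auto.
Qed.

Lemma mcont0_mc f x : 0 <= x -> mcont0 f x -> mc (fun t => f (Rmax 0 t)) x.
Proof.
  intros Hx H. split4; apply (within0_cc (fun t => _ (f t))); auto;
  [apply (H _ In11)|apply (H _ In12)|apply (H _ In21)|apply (H _ In22)].
Qed.

Definition pm (a b : R) := Rmax a (Rmax 0 b).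

Lemma obar_pm a b : Omega_bar (pm a b, Rmax 0 b).
Proof. unfold Omega_bar, pm; simpl. split. apply Rmax_l. apply Rmax_r. Qed.

Lemma obar_cc2 (h : R -> R -> C) :
  (forall x y, Omega_bar (x, y) ->
     filterlim (fun p : R * R => h (fst p) (snd p)) (within Omega_bar (locally (x, y))) (locally (h x y))) ->
  forall u v, cc2 (fun a b => h (pm a b) (Rmax 0 b)) u v.
Proof.
  intros H u v.
  assert (Key : forall eps : posreal, exists d : posreal, forall a b, Rabs (a - u) < d -> Rabs (b - v) < d ->
      Rabs (fst (h (pm a b) (Rmax 0 b)) - fst (h (pm u v) (Rmax 0 v))) < eps /\
      Rabs (snd (h (pm a b) (Rmax 0 b)) - snd (h (pm u v) (Rmax 0 v))) < eps).
  { intros eps. destruct (proj1 (filterlim_locally _ _) (H _ _ (obar_pm u v)) eps) as [d Hd].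
    exists d. intros a b Ha Hb. apply ballC. apply (Hd (pm a b, Rmax 0 b)).
    - split; simpl; rewrite ballR.
      + eapply Rle_lt_trans. apply Rmax_lip2. apply Rmax_lub_lt; auto.
        eapply Rle_lt_trans. apply Rmax_lip. auto.
      + eapply Rle_lt_trans. apply Rmax_lip. auto.
    - apply obar_pm. }
  split; intros eps; destruct (Key eps) as [d Hd]; exists d; intros a b Ha Hb; apply Hd; auto.
Qed.

Lemma kernel_mc2 (K : R -> R -> M2) :
  (forall x y, Omega_bar (x, y) -> mcont_Obar K x y) ->
  forall u v, mc2 (fun a b => K (pm a b) (Rmax 0 b)) u v.
Proof.
  intros H u v. split4; apply (obar_cc2 (fun a b => _ (K a b))); intros x y Hxy;
  [apply (H x y Hxy _ In11)|apply (H x y Hxy _ In12)|apply (H x y Hxy _ In21)|apply (H x y Hxy _ In22)].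
Qed.

Lemma cc_ex_fst f a b : (forall t, cc f t) -> ex_RInt (fun t => fst (f t)) a b.
Proof. intros H. apply cont_ex_RInt. intros t; apply H. Qed.
Lemma cc_ex_snd f a b : (forall t, cc f t) -> ex_RInt (fun t => snd (f t)) a b.
Proof. intros H. apply cont_ex_RInt. intros t; apply H. Qed.

Lemma cint_eq f a b : (forall t, cc f t) ->
  cint f a b = (RInt (fun t => fst (f t)) a b, RInt (fun t => snd (f t)) a b).
Proof.
  intros H. unfold cint. apply (@is_RInt_unique C_R_CompleteNormedModule).
  apply (@is_RInt_fct_extend_pair R_NormedModule R_NormedModule f).
  - apply RInt_correctR. apply cc_ex_fst; auto.
  - apply RInt_correctR. apply cc_ex_snd; auto.
Qed.

Lemma cint_ext f g a b : (forall t, Rmin a b < t < Rmax a b -> f t = g t) -> cint f a b = cint g a b.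
Proof. intros H. unfold cint. apply (@RInt_ext C_R_CompleteNormedModule). auto. Qed.

Lemma mint_ext F G a b : (forall t, Rmin a b < t < Rmax a b -> F t = G t) -> mint F a b = mint G a b.
Proof. intros H. unfold mint. f_equal; apply cint_ext; intros t Ht; rewrite H; auto. Qed.

Lemma cint_plus f g a b : (forall t, cc f t) -> (forall t, cc g t) ->
  cint (fun t => f t + g t)%C a b = (cint f a b + cint g a b)%C.
Proof.
  intros Hf Hg. rewrite !cint_eq; auto using cc_plus.
  apply Ceq; simpl; rewrite RInt_plusR; auto; intros t; apply Hf || apply Hg.
Qed.

Lemma cint_cmul c f a b : (forall t, cc f t) -> cint (fun t => c * f t)%C a b = (c * cint f a b)%C.
Proof.
  intros Hf. rewrite !cint_eq; auto. 2: intros; apply cc_mult; auto using cc_const.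
  apply Ceq; simpl.
  - rewrite RInt_minusR, !RInt_scalR; auto; intros t; try apply cont_scal; apply Hf.
  - rewrite RInt_plusR, !RInt_scalR; auto; intros t; try apply cont_scal; apply Hf.
Qed.

Lemma Cneg1 (z : C) : (- z)%C = ((-1) * z)%C.
Proof. apply Ceq; simpl; rring. Qed.

Lemma cint_opp f a b : (forall t, cc f t) -> cint (fun t => - f t)%C a b = (- cint f a b)%C.
Proof.
  intros Hf. rewrite Cneg1.
  rewrite <- cint_cmul; auto. apply cint_ext. intros; apply Cneg1.
Qed.

Lemma cint_conj f a b : (forall t, cc f t) -> cint (fun t => Cconj (f t)) a b = Cconj (cint f a b).
Proof.
  intros Hf. rewrite !cint_eq; auto using cc_conj.
  apply Ceq; simpl; auto.
  replace (RInt (fun t => - snd (f t)) a b) with (RInt (fun t => (-1) * snd (f t)) a b)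
    by (apply RInt_ext; intros; rring).
  rewrite RInt_scalR. rring. intros t; apply Hf.
Qed.

Definition mcall (F : R -> M2) := forall t, mc F t.

Lemma mcall_e11 F : mcall F -> forall t, cc (fun s => m11 (F s)) t. Proof. intros H t; apply H. Qed.
Lemma mcall_e12 F : mcall F -> forall t, cc (fun s => m12 (F s)) t. Proof. intros H t; apply H. Qed.
Lemma mcall_e21 F : mcall F -> forall t, cc (fun s => m21 (F s)) t. Proof. intros H t; apply H. Qed.
Lemma mcall_e22 F : mcall F -> forall t, cc (fun s => m22 (F s)) t. Proof. intros H t; apply H. Qed.

Ltac ccauto := repeat (first [apply cc_plus | apply cc_mult | apply cc_opp | apply cc_const
   | apply mcall_e11 | apply mcall_e12 | apply mcall_e21 | apply mcall_e22 | intro]); auto.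

Lemma mint_add F G a b : mcall F -> mcall G -> mint (fun t => madd (F t) (G t)) a b = madd (mint F a b) (mint G a b).
Proof.
  intros HF HG. apply M2ext; simpl; apply cint_plus; ccauto.
Qed.

Lemma mint_opp F a b : mcall F -> mint (fun t => mopp (F t)) a b = mopp (mint F a b).
Proof.
  intros HF. apply M2ext; simpl; apply cint_opp; ccauto.
Qed.

Lemma mint_mscal c F a b : mcall F -> mint (fun t => mscal c (F t)) a b = mscal c (mint F a b).
Proof.
  intros HF. apply M2ext; simpl; apply cint_cmul; ccauto.
Qed.

Lemma mint_lmul A F a b : mcall F -> mint (fun t => mmul A (F t)) a b = mmul A (mint F a b).
Proof.
  intros HF. apply M2ext; simpl; (rewrite cint_plus; [|ccauto|ccauto]); rewrite !cint_cmul; ccauto.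
Qed.

Lemma mint_conjtr F a b : mcall F -> mint (fun t => mconj (mtr (F t))) a b = mconj (mtr (mint F a b)).
Proof.
  intros HF. apply M2ext; simpl; apply cint_conj; ccauto.
Qed.

Lemma cftc h dh a b : a < b -> (forall t, a < t < b -> cD h t (dh t)) -> (forall t, cc dh t) ->
  cc h a -> cc h b -> cint dh a b = (h b - h a)%C.
Proof.
  intros Hab Hd Hc Ha Hb. rewrite cint_eq; auto. apply Ceq; simpl.
  - apply is_RInt_uniqueR. apply (ftc_open (fun t => fst (h t))); auto.
    intros t Ht; apply Hd; auto. intros t; apply Hc. apply Ha. apply Hb.
  - apply is_RInt_uniqueR. apply (ftc_open (fun t => snd (h t))); auto.
    intros t Ht; apply Hd; auto. intros t; apply Hc. apply Ha. apply Hb.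
Qed.

Lemma mftc H DH a b : a < b -> (forall t, a < t < b -> mD H t (DH t)) -> mcall DH ->
  mc H a -> mc H b -> mint DH a b = msub (H b) (H a).
Proof.
  intros Hab Hd Hc Ha Hb. apply M2ext; simpl;
  [rewrite (cftc (fun t => m11 (H t)) (fun t => m11 (DH t)))
  |rewrite (cftc (fun t => m12 (H t)) (fun t => m12 (DH t)))
  |rewrite (cftc (fun t => m21 (H t)) (fun t => m21 (DH t)))
  |rewrite (cftc (fun t => m22 (H t)) (fun t => m22 (DH t)))]; try ring; auto;
  try (intros t Ht; apply Hd; auto); try apply Ha; try apply Hb; ccauto.
Qed.

Lemma cleibniz (g gx : R -> R -> C) x : 0 < x ->
  (forall u v, cc2 g u v) -> (forall u v, cc2 gx u v) ->
  (forall u y, 0 < y < u -> cD (fun t => g t y) u (gx u y)) ->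
  cD (fun u => cint (g u) 0 u) x (Cplus (g x x) (cint (gx x) 0 x)).
Proof.
  intros Hx Hg Hgx Hd.
  assert (Hg1 : forall u t, cc (g u) t) by (intros; apply cc2_cc_snd; auto).
  assert (Hgx1 : forall u t, cc (gx u) t) by (intros; apply cc2_cc_snd; auto).
  rewrite (cint_eq (gx x)); auto.
  split.
  - apply (is_derive_ext (fun u => RInt (fun y => fst (g u y)) 0 u)).
    { intros u. rewrite cint_eq; auto. }
    apply (leibniz (fun u y => fst (g u y)) (fun u y => fst (gx u y))); auto.
    intros; apply Hg. intros; apply Hgx. intros u y Hy; apply Hd; auto.
  - apply (is_derive_ext (fun u => RInt (fun y => snd (g u y)) 0 u)).
    { intros u. rewrite cint_eq; auto. }
    apply (leibniz (fun u y => snd (g u y)) (fun u y => snd (gx u y))); auto.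
    intros; apply Hg. intros; apply Hgx. intros u y Hy; apply Hd; auto.
Qed.

Lemma mleibniz (G Gx : R -> R -> M2) x : 0 < x ->
  (forall u v, mc2 G u v) -> (forall u v, mc2 Gx u v) ->
  (forall u y, 0 < y < u -> mD (fun t => G t y) u (Gx u y)) ->
  mD (fun u => mint (G u) 0 u) x (madd (G x x) (mint (Gx x) 0 x)).
Proof.
  intros Hx HG HGx Hd. split4; simpl;
  [apply (cleibniz (fun a b => m11 (G a b)) (fun a b => m11 (Gx a b)))
  |apply (cleibniz (fun a b => m12 (G a b)) (fun a b => m12 (Gx a b)))
  |apply (cleibniz (fun a b => m21 (G a b)) (fun a b => m21 (Gx a b)))
  |apply (cleibniz (fun a b => m22 (G a b)) (fun a b => m22 (Gx a b)))]; auto;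
  try (intros; apply HG); try (intros; apply HGx); intros u y Hy; apply Hd; auto.
Qed.

Lemma cont_int0 (k : R -> R -> R) : (forall u v, continuity_2d_pt k u v) ->
  continuity_pt (fun u => RInt (k (Rmax 0 u)) 0 (Rmax 0 u)) 0.
Proof.
  intros Hk. destruct (Hk 0 0 (mkposreal 1 Rlt_0_1)) as [d0 Hd0].
  set (M := Rabs (k 0 0) + 1).
  assert (HM : 0 < M) by (unfold M; generalize (Rabs_pos (k 0 0)); lra).
  apply continuity_pt_filterlim. apply filterlim_locally. intros eps.
  assert (Hd : 0 < Rmin d0 (eps / M)) by (apply Rmin_pos; [apply cond_pos|apply Rdiv_lt_0_compat; [apply cond_pos|auto]]).
  exists (mkposreal _ Hd). intros t Ht. rewrite ballR in *. simpl in Ht.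
  rewrite (Rmax_left 0 0) by lra. rewrite RInt_point. change (zero : R) with 0.
  rewrite Rminus_0_r.
  set (w := Rmax 0 t).
  assert (Hw0 : 0 <= w) by apply Rmax_l.
  assert (Hwt : w <= Rabs t) by (unfold w, Rmax; destruct Rle_dec; [apply Rle_abs|apply Rabs_pos]).
  assert (Hw1 : w < d0) by (eapply Rle_lt_trans; [exact Hwt|]; rewrite Rminus_0_r in Ht; eapply Rlt_le_trans; [exact Ht|apply Rmin_l]).
  assert (Hw2 : w < eps / M) by (eapply Rle_lt_trans; [exact Hwt|]; rewrite Rminus_0_r in Ht; eapply Rlt_le_trans; [exact Ht|apply Rmin_r]).
  eapply Rle_lt_trans. apply abs_RInt_le_const with (M := M). auto.
  apply cont_ex_RInt. intros; apply c2_snd; auto.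
  intros s Hs. assert (Hq : Rabs (k w s - k 0 0) < 1).
  { apply (Hd0 w s). rewrite Rminus_0_r, Rabs_right; lra. rewrite Rminus_0_r, Rabs_right; lra. }
  change (Rabs (k w s - k 0 0) < 1) in Hq.
  unfold M. generalize (Rabs_triang_inv (k w s) (k 0 0)). lra.
  rewrite Rminus_0_r. apply (Rmult_lt_reg_r (/ M)). apply Rinv_0_lt_compat; auto.
  rewrite Rmult_assoc, Rinv_r, Rmult_1_r by lra. exact Hw2.
Qed.

Lemma cont_ext (f g : R -> R) t : (forall x, f x = g x) -> continuity_pt f t -> continuity_pt g t.
Proof. intros E H. apply continuity_pt_filterlim. rewrite <- (E t).
  apply (filterlim_ext f). auto. apply continuity_pt_filterlim. auto. Qed.

Lemma cint0_cc (h : R -> R -> C) : (forall u v, cc2 h u v) ->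
  cc (fun u => cint (h (Rmax 0 u)) 0 (Rmax 0 u)) 0.
Proof.
  intros Hh. split.
  - apply (cont_ext (fun u => RInt (fun y => fst (h (Rmax 0 u) y)) 0 (Rmax 0 u))).
    { intros u. rewrite cint_eq; auto. intros t; apply cc2_cc_snd; auto. }
    apply (cont_int0 (fun a b => fst (h a b))). intros; apply Hh.
  - apply (cont_ext (fun u => RInt (fun y => snd (h (Rmax 0 u) y)) 0 (Rmax 0 u))).
    { intros u. rewrite cint_eq; auto. intros t; apply cc2_cc_snd; auto. }
    apply (cont_int0 (fun a b => snd (h a b))). intros; apply Hh.
Qed.

Lemma mint0_mc (G : R -> R -> M2) : (forall u v, mc2 G u v) ->
  mc (fun u => mint (G (Rmax 0 u)) 0 (Rmax 0 u)) 0.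
Proof.
  intros HG. split4; simpl;
  [apply (cint0_cc (fun a b => m11 (G a b)))|apply (cint0_cc (fun a b => m12 (G a b)))
  |apply (cint0_cc (fun a b => m21 (G a b)))|apply (cint0_cc (fun a b => m22 (G a b)))]; intros; apply HG.
Qed.

Lemma deriv_RInt (q : R -> R) a u : (forall t, continuity_pt q t) -> is_derive (fun v => RInt q a v) u (q u).
Proof.
  intros Hc. apply (is_derive_RInt q (fun t => RInt q a t) a u).
  - apply filter_forall. intros v. apply RInt_correctR. apply cont_ex_RInt. auto.
  - apply continuity_pt_filterlim. apply Hc.
Qed.

Lemma cD_cint (q : R -> C) a u : (forall t, cc q t) -> cD (fun v => cint q a v) u (q u).
Proof.
  intros Hq. split.
  - apply (is_derive_ext (fun v => RInt (fun t => fst (q t)) a v)).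
    intros v; rewrite cint_eq; auto. apply deriv_RInt. intros; apply Hq.
  - apply (is_derive_ext (fun v => RInt (fun t => snd (q t)) a v)).
    intros v; rewrite cint_eq; auto. apply deriv_RInt. intros; apply Hq.
Qed.

Lemma cont_max0 t : continuity_pt (Rmax 0) t.
Proof.
  apply continuity_pt_filterlim. apply filterlim_locally. intros eps. exists eps.
  intros y Hy. rewrite ballR in *. eapply Rle_lt_trans. apply Rmax_lip. exact Hy.
Qed.

Lemma cc_comp (f : R -> C) g t : continuity_pt g t -> cc f (g t) -> cc (fun s => f (g s)) t.
Proof.
  intros Hg [F1 F2]. split.
  - apply (continuity_pt_comp g (fun s => fst (f s))); auto.
  - apply (continuity_pt_comp g (fun s => snd (f s))); auto.
Qed.

Lemma mc_comp (F : R -> M2) g t : continuity_pt g t -> mc F (g t) -> mc (fun s => F (g s)) t.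
Proof. intros Hg (F1&F2&F3&F4). split4; apply (cc_comp (fun s => _ (F s))); auto. Qed.

Lemma cc_ext f g t : (forall s, f s = g s) -> cc f t -> cc g t.
Proof. intros E [F1 F2]. split.
  apply (cont_ext (fun s => fst (f s))); auto. intros s; rewrite E; auto.
  apply (cont_ext (fun s => snd (f s))); auto. intros s; rewrite E; auto. Qed.

Lemma mc_ext F G t : (forall s, F s = G s) -> mc F t -> mc G t.
Proof. intros E H. replace G with F; auto. apply functional_extensionality. auto. Qed.

Lemma mcont0_all f : (forall x, 0 <= x -> mcont0 f x) -> mcall (fun t => f (Rmax 0 t)).
Proof.
  intros H s. apply (mc_ext (fun t => (fun u => f (Rmax 0 u)) (Rmax 0 t))).
  { intros t. rewrite (Rmax_right 0 (Rmax 0 t)); auto. apply Rmax_l. }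
  apply (mc_comp (fun u => f (Rmax 0 u)) (Rmax 0)). apply cont_max0. apply mcont0_mc. apply Rmax_l. apply H. apply Rmax_l.
Qed.

Lemma cc_minus f g t : cc f t -> cc g t -> cc (fun s => f s - g s)%C t.
Proof. intros; apply cc_plus; auto; apply cc_opp; auto. Qed.

Definition Rform (t1 t2 : C) : M2 :=
  mscal (cexp (Copp t1)) (mkM2 (ccosh t2) (Copp (csinh t2)) (Copp (csinh t2)) (ccosh t2)).

Lemma Rmat_form P1 P2 x : Rmat P1 P2 x = Rform (theta1 P1 P2 x) (theta2 P1 P2 x).
Proof. reflexivity. Qed.

Lemma Rform_B a b : mmul (Rform a b) Bm = mmul Bm (Rform a b).
Proof. unfold Rform, Bm. meq. Qed.

Lemma cD_ccosh z x dz : cD z x dz -> exists d, cD (fun t => ccosh (z t)) x d.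
Proof.
  intros H. eexists. unfold ccosh. apply cD_mult. apply cD_const.
  apply cD_plus. apply cD_cexp. exact H. apply cD_cexp. apply cD_opp. exact H.
Qed.

Lemma cD_csinh z x dz : cD z x dz -> exists d, cD (fun t => csinh (z t)) x d.
Proof.
  intros H. eexists. unfold csinh. apply cD_mult. apply cD_const.
  apply cD_plus. apply cD_cexp. exact H. apply cD_opp. apply cD_cexp. apply cD_opp. exact H.
Qed.

Lemma Rform_D t1 t2 x d1 d2 : cD t1 x d1 -> cD t2 x d2 -> exists L, mD (fun u => Rform (t1 u) (t2 u)) x L.
Proof.
  intros H1 H2. destruct (cD_ccosh _ _ _ H2) as [c Hc]. destruct (cD_csinh _ _ _ H2) as [s Hs].
  eexists. unfold Rform. apply mD_mscal. apply cD_cexp. apply cD_opp; exact H1.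
  apply (mD_mk (fun u => ccosh (t2 u)) (fun u => Copp (csinh (t2 u))) (fun u => Copp (csinh (t2 u))) (fun u => ccosh (t2 u))). exact Hc. apply cD_opp; exact Hs. apply cD_opp; exact Hs. exact Hc.
Qed.

Lemma cexp0 : cexp 0%C = 1%C.
Proof. unfold cexp, Re, Im. simpl. rewrite exp_0, cos_0, sin_0. apply Ceq; simpl; ring. Qed.

Lemma Rform0 : Rform 0%C 0%C = mkM2 1 0 0 1.
Proof.
  unfold Rform, ccosh, csinh, cexp, Re, Im. apply M2ext; simpl; apply Ceq; simpl;
  rewrite ?Ropp_0, ?exp_0, ?cos_0, ?sin_0; field.
Qed.

Lemma cint_00 f : cint f 0 0 = 0%C.
Proof. unfold cint. rewrite RInt_point. reflexivity. Qed.

Section RmatFacts.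
Variables P1 P2 : R -> M2.
Hypothesis HP1 : forall x, 0 <= x -> mcont0 P1 x.
Hypothesis HP2 : forall x, 0 <= x -> mcont0 P2 x.

Definition q1 s := (m12 (P2 s) + m21 (P2 s) - m12 (P1 s) - m21 (P1 s))%C.
Definition q2 s := (m11 (P2 s) + m22 (P2 s) - m11 (P1 s) - m22 (P1 s))%C.
Definition th1e u := Cmult (RtoC (/2)) (cint (fun s => q1 (Rmax 0 s)) 0 u).
Definition th2e u := Cmult (RtoC (/2)) (cint (fun s => q2 (Rmax 0 s)) 0 u).

Lemma q1_cc t : cc (fun s => q1 (Rmax 0 s)) t.
Proof.
  generalize (mcont0_all P1 HP1 t) (mcont0_all P2 HP2 t).
  intros (A1&A2&A3&A4) (B1&B2&B3&B4). unfold q1.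
  apply cc_minus; [apply cc_minus|]; auto. apply cc_plus; auto.
Qed.

Lemma q2_cc t : cc (fun s => q2 (Rmax 0 s)) t.
Proof.
  generalize (mcont0_all P1 HP1 t) (mcont0_all P2 HP2 t).
  intros (A1&A2&A3&A4) (B1&B2&B3&B4). unfold q2.
  apply cc_minus; [apply cc_minus|]; auto. apply cc_plus; auto.
Qed.

Lemma th1e_eq u : 0 <= u -> theta1 P1 P2 u = th1e u.
Proof.
  intros Hu. unfold theta1, th1e. f_equal. apply cint_ext. intros t Ht.
  rewrite Rmin_left, Rmax_right in Ht by lra. rewrite Rmax_right by lra. reflexivity.
Qed.

Lemma th2e_eq u : 0 <= u -> theta2 P1 P2 u = th2e u.
Proof.
  intros Hu. unfold theta2, th2e. f_equal. apply cint_ext. intros t Ht.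
  rewrite Rmin_left, Rmax_right in Ht by lra. rewrite Rmax_right by lra. reflexivity.
Qed.

Lemma th1e_D u : exists d, cD th1e u d.
Proof. eexists. unfold th1e. apply cD_mult. apply cD_const. apply cD_cint. apply q1_cc. Qed.
Lemma th2e_D u : exists d, cD th2e u d.
Proof. eexists. unfold th2e. apply cD_mult. apply cD_const. apply cD_cint. apply q2_cc. Qed.

Lemma Rb_D u : exists L, mD (fun v => Rform (th1e v) (th2e v)) u L.
Proof.
  destruct (th1e_D u) as [d1 H1]. destruct (th2e_D u) as [d2 H2].
  apply (Rform_D th1e th2e u d1 d2); auto.
Qed.

Lemma Rmat_D x : 0 < x -> exists dR, mD (Rmat P1 P2) x dR.
Proof.
  intros Hx. destruct (Rb_D x) as [L HL]. exists L.
  eapply mD_ext_loc; [|exact HL]. eapply filter_imp; [|apply (loc_gt x 0 Hx)].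
  intros t Ht. rewrite Rmat_form, th1e_eq, th2e_eq by lra. reflexivity.
Qed.

Lemma Rmat_c0 : mc (fun u => Rmat P1 P2 (Rmax 0 u)) 0.
Proof.
  apply (mc_ext (fun u => (fun v => Rform (th1e v) (th2e v)) (Rmax 0 u))).
  { intros u. rewrite Rmat_form, th1e_eq, th2e_eq; auto; apply Rmax_l. }
  apply (mc_comp (fun v => Rform (th1e v) (th2e v)) (Rmax 0)). apply cont_max0.
  destruct (Rb_D (Rmax 0 0)) as [L HL]. eapply mc_of_mD; eauto.
Qed.

Lemma Rmat_0 : Rmat P1 P2 0 = mkM2 1 0 0 1.
Proof.
  rewrite Rmat_form. unfold theta1, theta2. rewrite !cint_00.
  replace (Cmult (RtoC (/ 2)) 0%C) with (RtoC 0) by (apply Ceq; simpl; ring).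
  apply Rform0.
Qed.

Lemma Rmat_B x : mmul (Rmat P1 P2 x) Bm = mmul Bm (Rmat P1 P2 x).
Proof. rewrite Rmat_form. apply Rform_B. Qed.

End RmatFacts.

Lemma cenergy (c : R -> C) mu x : 0 < x ->
  (forall t, 0 < t -> cD c t (Cmult (0, mu) (c t))) ->
  cc (fun t => c (Rmax 0 t)) 0 -> c 0 = RtoC 0 -> c x = RtoC 0.
Proof.
  intros Hx Hd [H1 H2] H0.
  destruct (energy (fun t => fst (c t)) (fun t => snd (c t)) mu x Hx) as [E1 E2]; auto.
  - intros t Ht. destruct (Hd t Ht) as [D1 D2]. split.
    + eapply is_derive_eq. exact D1. simpl. rring.
    + eapply is_derive_eq. exact D2. simpl. rring.
  - rewrite H0; reflexivity.
  - rewrite H0; reflexivity.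
  - apply Ceq; simpl; auto.
Qed.

Lemma uniq_B (d : R -> M2) rho :
  (forall t, 0 < t -> exists D, mD d t D /\ D = mmul Bm (mscal (0, rho) (d t))) ->
  mc (fun t => d (Rmax 0 t)) 0 -> d 0 = mzero -> forall x, 0 <= x -> d x = mzero.
Proof.
  intros Hd Hc H0 x Hx.
  destruct (Req_dec x 0) as [->|Hx0]; auto.
  assert (Hxp : 0 < x) by lra.
  destruct Hc as (C11 & C12 & C21 & C22).
  assert (Hcol : forall (e1 e2 : M2 -> C),
     (forall t, 0 < t -> exists a b, cD (fun u => e1 (d u)) t a /\ cD (fun u => e2 (d u)) t b /\
        a = Cmult (0, rho) (e2 (d t)) /\ b = Cmult (0, rho) (e1 (d t))) ->
     cc (fun t => e1 (d (Rmax 0 t))) 0 -> cc (fun t => e2 (d (Rmax 0 t))) 0 ->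
     e1 (d 0) = RtoC 0 -> e2 (d 0) = RtoC 0 -> e1 (d x) = RtoC 0 /\ e2 (d x) = RtoC 0).
  { intros e1 e2 He Ce1 Ce2 E1 E2.
    assert (U : (e1 (d x) + e2 (d x))%C = RtoC 0).
    { apply (cenergy (fun u => e1 (d u) + e2 (d u))%C rho x Hxp).
      - intros t Ht. destruct (He t Ht) as (a & b & Ha & Hb & -> & ->).
        eapply cD_eq. apply cD_plus; eauto. ring.
      - apply cc_plus; auto.
      - rewrite E1, E2. apply Ceq; simpl; ring. }
    assert (V : (e1 (d x) - e2 (d x))%C = RtoC 0).
    { apply (cenergy (fun u => e1 (d u) - e2 (d u))%C (- rho) x Hxp).
      - intros t Ht. destruct (He t Ht) as (a & b & Ha & Hb & -> & ->).
        eapply cD_eq. apply cD_plus; eauto. apply cD_opp; eauto.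
        apply Ceq; simpl; ring.
      - apply cc_plus; auto. apply cc_opp; auto.
      - rewrite E1, E2. apply Ceq; simpl; ring. }
    split.
    - replace (e1 (d x)) with (Cmult (RtoC (/2)) ((e1 (d x) + e2 (d x)) + (e1 (d x) - e2 (d x))))%C.
      rewrite U, V. apply Ceq; simpl; ring. apply Ceq; simpl; field.
    - replace (e2 (d x)) with (Cmult (RtoC (/2)) ((e1 (d x) + e2 (d x)) - (e1 (d x) - e2 (d x))))%C.
      rewrite U, V. apply Ceq; simpl; ring. apply Ceq; simpl; field. }
  destruct (Hcol m11 m21) as [A1 A2]; auto.
  { intros t Ht. destruct (Hd t Ht) as (D & (D1 & D2 & D3 & D4) & ->).
    do 2 eexists. split; [exact D1|]. split; [exact D3|]. simpl. split; ring. }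
  { rewrite H0; reflexivity. } { rewrite H0; reflexivity. }
  destruct (Hcol m12 m22) as [A3 A4]; auto.
  { intros t Ht. destruct (Hd t Ht) as (D & (D1 & D2 & D3 & D4) & ->).
    do 2 eexists. split; [exact D2|]. split; [exact D4|]. simpl. split; ring. }
  { rewrite H0; reflexivity. } { rewrite H0; reflexivity. }
  apply M2ext; simpl; auto.
Qed.

Lemma mcont0_Pzero x : mcont0 Pzero x.
Proof. intros e He. unfold Pzero. apply filterlim_const. Qed.

Lemma solveB D X Y : madd (mmul Bm D) X = Y -> D = mmul Bm (msub Y X).
Proof. intros <-. unfold Bm. meq. Qed.

Lemma lin_solve U V W Z : madd (madd U V) (msub W Z) = mzero -> U = msub (msub Z W) V.
Proof.
  intros H. apply M2ext.
  - apply (f_equal m11) in H; simpl in H.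
    replace (m11 U) with (m11 U + m11 V + (m11 W + - m11 Z) - m11 V - (m11 W + - m11 Z))%C by ring.
    rewrite H. simpl; ring.
  - apply (f_equal m12) in H; simpl in H.
    replace (m12 U) with (m12 U + m12 V + (m12 W + - m12 Z) - m12 V - (m12 W + - m12 Z))%C by ring.
    rewrite H. simpl; ring.
  - apply (f_equal m21) in H; simpl in H.
    replace (m21 U) with (m21 U + m21 V + (m21 W + - m21 Z) - m21 V - (m21 W + - m21 Z))%C by ring.
    rewrite H. simpl; ring.
  - apply (f_equal m22) in H; simpl in H.
    replace (m22 U) with (m22 U + m22 V + (m22 W + - m22 Z) - m22 V - (m22 W + - m22 Z))%C by ring.
    rewrite H. simpl; ring.
Qed.

Lemma pm_eq u y : 0 <= y <= u -> pm u y = u.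
Proof. intros H. unfold pm. rewrite (Rmax_right 0 y) by lra. apply Rmax_left. lra. Qed.

Lemma Rmax0_eq y : 0 <= y -> Rmax 0 y = y.
Proof. intros H. apply Rmax_right. auto. Qed.

Lemma massoc A B C : mmul (mmul A B) C = mmul A (mmul B C).
Proof. meq. Qed.

Lemma csub_zero (a b : C) : (a + - b)%C = RtoC 0 -> a = b.
Proof. intros H. replace a with (a + - b + b)%C by ring. rewrite H. apply Ceq; simpl; ring. Qed.

Lemma msub_zero A B : msub A B = mzero -> A = B.
Proof.
  intros E. apply M2ext; apply csub_zero;
  [apply (f_equal m11) in E|apply (f_equal m12) in E|apply (f_equal m21) in E|apply (f_equal m22) in E];
  exact E.
Qed.

Section Core.
Variables (P : R -> M2) (Q : M2) (rho : R) (psi s : R -> M2) (K Kx Ky : R -> R -> M2).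
Hypothesis HPc : forall x, 0 <= x -> mcont0 P x.
Hypothesis Hpsi0 : psi 0 = Q.
Hypothesis Hpsic : forall x, 0 <= x -> mcont0 psi x.
Hypothesis Hpsid : forall x, 0 < x -> exists D, mderiv0 psi x D /\
     madd (mmul Bm D) (mmul (P x) (psi x)) = mscal (0, rho) (psi x).
Hypothesis Hcont : forall x y, Omega_bar (x, y) ->
        mcont_Obar K x y /\ mcont_Obar Kx x y /\ mcont_Obar Ky x y.
Hypothesis Hder : forall x y, Omega (x, y) ->
        mderiv (fun t => K t y) x (Kx x y) /\ mderiv (fun s => K x s) y (Ky x y).
Hypothesis Hpde : forall x y, Omega (x, y) ->
        madd (madd (mmul Bm (Kx x y)) (mmul (Ky x y) Bm))
             (msub (mmul (Pzero x) (K x y)) (mmul (K x y) (P y))) = mzero.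
Hypothesis Hbc : forall x, 0 <= x -> mmul (mmul (K x 0) Bm) Q = mzero.
Hypothesis Hdiag : forall x, 0 <= x -> forall dR, mderiv0 (Rmat P Pzero) x dR ->
     msub (mmul (K x x) Bm) (mmul Bm (K x x)) =
     msub (madd (mmul Bm dR) (mmul (Pzero x) (Rmat P Pzero x))) (mmul (Rmat P Pzero x) (P x)).

Let psib t := psi (Rmax 0 t).
Let Pb t := P (Rmax 0 t).
Let Kb a b := K (pm a b) (Rmax 0 b).
Let Kxb a b := Kx (pm a b) (Rmax 0 b).
Let Kyb a b := Ky (pm a b) (Rmax 0 b).
Let Gb u y := mmul (Kb u y) (psib y).
Let Gxb u y := mmul (Kxb u y) (psib y).
Let F t := mint (fun y => mmul (K t y) (psi y)) 0 t.

Lemma Hpsib : mcall psib. Proof. apply mcont0_all; auto. Qed.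
Lemma HPb : mcall Pb. Proof. apply mcont0_all; auto. Qed.
Lemma HKb u v : mc2 Kb u v. Proof. apply kernel_mc2. intros x y H; apply Hcont; auto. Qed.
Lemma HKxb u v : mc2 Kxb u v. Proof. apply (kernel_mc2 Kx). intros x y H; apply Hcont; auto. Qed.
Lemma HKyb u v : mc2 Kyb u v. Proof. apply (kernel_mc2 Ky). intros x y H; apply Hcont; auto. Qed.
Lemma HGb u v : mc2 Gb u v.
Proof. apply mc2_mul. apply HKb. apply mc2_snd_only. apply Hpsib. Qed.
Lemma HGxb u v : mc2 Gxb u v.
Proof. apply mc2_mul. apply HKxb. apply mc2_snd_only. apply Hpsib. Qed.

Lemma F_eq t : 0 <= t -> F t = mint (Gb t) 0 t.
Proof.
  intros Ht. unfold F. apply mint_ext. intros y Hy.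
  rewrite Rmin_left, Rmax_right in Hy by lra. unfold Gb, Kb, psib.
  rewrite pm_eq, Rmax0_eq by lra. reflexivity.
Qed.

Lemma FD x : 0 < x -> mD F x (madd (Gb x x) (mint (Gxb x) 0 x)).
Proof.
  intros Hx.
  assert (HL : mD (fun u => mint (Gb u) 0 u) x (madd (Gb x x) (mint (Gxb x) 0 x))).
  { apply mleibniz; auto. apply HGb. apply HGxb.
    intros u y Hy.
    assert (Hom : Omega (u, y)) by (unfold Omega; simpl; lra).
    eapply mD_ext_loc.
    2: { eapply mD_eq. apply mD_mul. apply mderiv_mD. apply (proj1 (Hder u y Hom)). apply (mD_const (psi y)).
         unfold Gxb, Kxb, psib. rewrite pm_eq, Rmax0_eq by lra. meq. }
    eapply filter_imp; [|apply (loc_gt u y (proj2 Hy))]. intros t Ht. simpl.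
    unfold Gb, Kb, psib. rewrite pm_eq, Rmax0_eq by lra. reflexivity. }
  eapply mD_ext_loc; [|exact HL]. eapply filter_imp; [|apply (loc_gt x 0 Hx)].
  intros t Ht. rewrite F_eq; auto. lra.
Qed.

Let Hf x y := mmul (mmul (Kb x y) Bm) (psib y).
Let DH x y := madd (mmul (mmul (Kyb x y) Bm) (psib y))
   (mmul (Kb x y) (msub (mscal (0, rho) (psib y)) (mmul (Pb y) (psib y)))).

Lemma HD x y : 0 < y < x -> mD (Hf x) y (DH x y).
Proof.
  intros Hy. destruct (Hpsid y (proj1 Hy)) as [D [HDd HDe]]. apply mderiv0_mD in HDd; [|lra].
  assert (Hom : Omega (x, y)) by (unfold Omega; simpl; lra).
  eapply mD_ext_loc.
  2: { eapply mD_eq. apply mD_mul. apply mD_mul. apply mderiv_mD. apply (proj2 (Hder x y Hom)).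
       apply (mD_const Bm). exact HDd.
       unfold DH, Kyb, Kb, psib, Pb. rewrite pm_eq, Rmax0_eq by lra. rewrite (solveB _ _ _ HDe). meq. }
  eapply filter_imp; [|apply filter_and; [apply (loc_gt y 0 (proj1 Hy))|apply (loc_lt y x (proj2 Hy))]].
  intros t [Ht1 Ht2]. unfold Hf, Kb, psib. rewrite pm_eq, Rmax0_eq by lra. reflexivity.
Qed.

Lemma DH_c x : mcall (DH x).
Proof.
  intros t. unfold DH, msub. apply mc_add. apply mc_mul. apply mc_mul.
  apply (mc2_mc_snd Kyb). apply HKyb. apply mc_const. apply Hpsib.
  apply mc_mul. apply (mc2_mc_snd Kb). apply HKb. apply mc_add. apply mc_mscal. apply cc_const. apply Hpsib.
  apply mc_opp. apply mc_mul. apply HPb. apply Hpsib.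
Qed.

Lemma H_c x t : mc (Hf x) t.
Proof.
  unfold Hf. apply mc_mul. apply mc_mul. apply (mc2_mc_snd Kb). apply HKb. apply mc_const. apply Hpsib.
Qed.

Lemma IBP x : 0 < x -> mint (DH x) 0 x = mmul (mmul (K x x) Bm) (psi x).
Proof.
  intros Hx. rewrite (mftc (Hf x) (DH x) 0 x); auto.
  - unfold Hf, Kb, psib. rewrite (pm_eq x x), (pm_eq x 0), !Rmax0_eq by lra.
    rewrite Hpsi0, Hbc by lra. meq.
  - intros t Ht; apply HD; lra.
  - apply DH_c.
  - apply H_c.
  - apply H_c.
Qed.

Lemma pde_pt x y : 0 < y < x -> mmul Bm (Gxb x y) = msub (mscal (0, rho) (Gb x y)) (DH x y).
Proof.
  intros Hy. assert (Hom : Omega (x, y)) by (unfold Omega; simpl; lra).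
  unfold Gxb, Gb, DH, Kxb, Kb, Kyb, psib, Pb. rewrite pm_eq, Rmax0_eq by lra.
  rewrite <- massoc. rewrite (lin_solve _ _ _ _ (Hpde x y Hom)). unfold Pzero. meq.
Qed.

Lemma intB x : 0 < x ->
  mmul Bm (mint (Gxb x) 0 x) = msub (mscal (0, rho) (F x)) (mmul (mmul (K x x) Bm) (psi x)).
Proof.
  intros Hx. rewrite <- mint_lmul.
  2: { intros t. apply (mc2_mc_snd Gxb). apply HGxb. }
  rewrite (mint_ext _ (fun y => madd (mscal (0, rho) (Gb x y)) (mopp (DH x y)))).
  2: { intros t Ht. rewrite Rmin_left, Rmax_right in Ht by lra. rewrite pde_pt by lra. reflexivity. }
  rewrite mint_add, mint_mscal, mint_opp, IBP, <- F_eq by (lra || (intros t; try apply mc_mscal; try apply mc_opp;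
     try apply cc_const; try apply DH_c; apply (mc2_mc_snd Gb); apply HGb)).
  reflexivity.
Qed.

Let g t := madd (mmul (Rmat P Pzero t) (psi t)) (F t).

Lemma HPz : forall x, 0 <= x -> mcont0 Pzero x.
Proof. intros; apply mcont0_Pzero. Qed.

Lemma solve_dR A D R0 Z : A = msub (madd (mmul Bm D) (mmul mzero R0)) Z -> D = mmul Bm (madd A Z).
Proof. intros ->. unfold Bm. meq. Qed.

Lemma BB M : M = mmul Bm (mmul Bm M).
Proof. unfold Bm. meq. Qed.

Lemma gD x : 0 < x -> exists Dg, mD g x Dg /\ Dg = mmul Bm (mscal (0, rho) (g x)).
Proof.
  intros Hx.
  destruct (Rmat_D P Pzero HPc HPz x Hx) as [dR HdR].
  destruct (Hpsid x Hx) as [Dp [HDp HDpe]]. apply mderiv0_mD in HDp; auto.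
  eexists. split.
  { apply mD_add. apply mD_mul. exact HdR. exact HDp. apply FD; auto. }
  assert (Hd := Hdiag x ltac:(lra) dR (mD_mderiv0 _ _ _ HdR)).
  unfold Pzero in Hd.
  rewrite (solve_dR _ _ _ _ Hd). rewrite (solveB _ _ _ HDpe).
  rewrite (BB (mint (Gxb x) 0 x)). rewrite intB by auto.
  unfold g, Gb, Kb, psib. rewrite pm_eq, Rmax0_eq by lra.
  rewrite !Rmat_form. unfold Rform.
  set (e := cexp _). set (c := ccosh _). set (sh := csinh _).
  unfold Bm. meq.
Qed.

Hypothesis Hs0 : s 0 = Q.
Hypothesis Hsc : forall x, 0 <= x -> mcont0 s x.
Hypothesis Hsd : forall x, 0 < x -> exists D, mderiv0 s x D /\
     madd (mmul Bm D) (mmul (Pzero x) (s x)) = mscal (0, rho) (s x).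

Lemma core x : 0 <= x -> s x = g x.
Proof.
  intros Hx.
  assert (Hu := uniq_B (fun t => msub (s t) (g t)) rho).
  assert (E : msub (s x) (g x) = mzero).
  { apply Hu; auto.
    - intros t Ht. destruct (gD t Ht) as [Dg [HDg EDg]].
      destruct (Hsd t Ht) as [Ds [HDs EDs]]. apply mderiv0_mD in HDs; auto.
      exists (madd Ds (mopp Dg)). split.
      + apply mD_add; auto. apply mD_opp; auto.
      + rewrite EDg, (solveB _ _ _ EDs). unfold Pzero, Bm. meq.
    - unfold msub. apply mc_add. apply mcont0_mc; [lra|apply Hsc; lra].
      apply mc_opp. unfold g. apply mc_add. apply mc_mul.
      apply (Rmat_c0 P Pzero HPc HPz). apply mcont0_mc; [lra|apply Hpsic; lra].
      apply (mc_ext (fun u => mint (Gb (Rmax 0 u)) 0 (Rmax 0 u))).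
      { intros u. rewrite F_eq; auto. apply Rmax_l. }
      apply mint0_mc. apply HGb.
    - unfold g, F. rewrite Hs0, Hpsi0, (Rmat_0 P Pzero).
      unfold mint. rewrite !cint_00. meq. }
  apply msub_zero; exact E.
Qed.

End Core.

Definition ct (X : M2) := mconj (mtr X).

Lemma ct_mul X Y : ct (mmul X Y) = mmul (ct Y) (ct X).
Proof. apply M2ext; simpl; apply Ceq; simpl; ring. Qed.
Lemma ct_add X Y : ct (madd X Y) = madd (ct X) (ct Y).
Proof. apply M2ext; simpl; apply Ceq; simpl; ring. Qed.
Lemma ct_opp X : ct (mopp X) = mopp (ct X).
Proof. apply M2ext; simpl; apply Ceq; simpl; ring. Qed.
Lemma ct_scal c X : ct (mscal c X) = mscal (Cconj c) (ct X).
Proof. apply M2ext; simpl; apply Ceq; simpl; ring. Qed.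
Lemma ct_B : ct Bm = Bm.
Proof. apply M2ext; simpl; apply Ceq; simpl; ring. Qed.
Lemma ct_ct X : ct (ct X) = X.
Proof. apply M2ext; simpl; apply Ceq; simpl; ring. Qed.
Lemma ct_zero : ct mzero = mzero.
Proof. apply M2ext; simpl; apply Ceq; simpl; ring. Qed.

Lemma filterlim_conj {T} (F : (T -> Prop) -> Prop) {FF : Filter F} (g : T -> C) z :
  filterlim g F (locally z) -> filterlim (fun t => Cconj (g t)) F (locally (Cconj z)).
Proof.
  intros H. apply filterlim_locally. intros eps.
  eapply filter_imp; [|apply (proj1 (filterlim_locally _ _) H eps)].
  intros t Ht. rewrite ballC in *. simpl. destruct Ht as [H1 H2]. split; auto.
  replace (- snd (g t) - - snd z) with (- (snd (g t) - snd z)) by ring. rewrite Rabs_Ropp. auto.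
Qed.

Lemma filterlim_copp {T} (F : (T -> Prop) -> Prop) {FF : Filter F} (g : T -> C) z :
  filterlim g F (locally z) -> filterlim (fun t => Copp (g t)) F (locally (Copp z)).
Proof.
  intros H. apply filterlim_locally. intros eps.
  eapply filter_imp; [|apply (proj1 (filterlim_locally _ _) H eps)].
  intros t Ht. rewrite ballC in *. simpl. destruct Ht as [H1 H2].
  replace (- fst (g t) - - fst z) with (- (fst (g t) - fst z)) by ring.
  replace (- snd (g t) - - snd z) with (- (snd (g t) - snd z)) by ring. rewrite !Rabs_Ropp. auto.
Qed.

Lemma mcont0_ct f x : mcont0 f x -> mcont0 (fun t => ct (f t)) x.
Proof.
  intros H e He. simpl in He.
  destruct He as [<-|[<-|[<-|[<-|[]]]]]; simpl; apply filterlim_conj; try apply _;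
  [apply (H _ In11)|apply (H _ In21)|apply (H _ In12)|apply (H _ In22)].
Qed.

Lemma mcont0_oppct f x : mcont0 f x -> mcont0 (fun t => mopp (ct (f t))) x.
Proof.
  intros H e He. simpl in He.
  destruct He as [<-|[<-|[<-|[<-|[]]]]]; simpl; apply filterlim_copp; try apply _; apply filterlim_conj; try apply _;
  [apply (H _ In11)|apply (H _ In21)|apply (H _ In12)|apply (H _ In22)].
Qed.

Lemma cD_conj f x d : cD f x d -> cD (fun t => Cconj (f t)) x (Cconj d).
Proof.
  intros [H1 H2]. split; simpl; auto. apply (is_derive_opp (fun t => snd (f t))); auto.
Qed.

Lemma mD_ct F x D : mD F x D -> mD (fun t => ct (F t)) x (ct D).
Proof.
  intros (H1&H2&H3&H4). split4; simpl; apply cD_conj; auto.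
Qed.

Lemma sol_tilde_ct P0 P1 Q rho f : is_sol_tilde P0 Q (0, rho) f ->
  (forall x, P1 x = mopp (ct (P0 x))) -> is_sol P1 (ct Q) (0, rho) (fun t => ct (f t)).
Proof.
  intros [H0 [Hc Hd]] HP. split; [|split].
  - rewrite H0. reflexivity.
  - intros x Hx. apply mcont0_ct. auto.
  - intros x Hx. destruct (Hd x Hx) as [D [HD HE]]. exists (ct D). split.
    + apply mD_mderiv0. apply mD_ct. apply mderiv0_mD; auto.
    + apply (f_equal ct) in HE. rewrite ct_add, ct_opp, !ct_mul, ct_B, ct_scal in HE.
      rewrite HP. transitivity (mopp (madd (mopp (mmul Bm (ct D))) (mmul (ct (P0 x)) (ct (f x))))).
      * meq.
      * rewrite HE. apply M2ext; simpl; apply Ceq; simpl; ring.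
Qed.

Lemma Rform_ct a b : ct (Rform a b) = Rform (Cconj a) (Cconj b).
Proof.
  unfold ct, Rform, ccosh, csinh, cexp, Re, Im. apply M2ext; simpl; apply Ceq; simpl;
  rewrite ?Ropp_involutive, ?Ropp_0, ?cos_neg, ?sin_neg; ring.
Qed.

Lemma conj_cint_ext f g x : 0 <= x -> (forall t, cc (fun s => g (Rmax 0 s)) t) ->
  (forall s, f s = Cconj (g s)) -> cint f 0 x = Cconj (cint g 0 x).
Proof.
  intros Hx Hg Hfg.
  rewrite (cint_ext f (fun s => Cconj (g (Rmax 0 s)))).
  2: { intros t Ht. rewrite Rmin_left, Rmax_right in Ht by lra. rewrite Hfg, Rmax_right by lra. reflexivity. }
  rewrite (cint_ext g (fun s => g (Rmax 0 s)) 0 x).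
  2: { intros t Ht. rewrite Rmin_left, Rmax_right in Ht by lra. rewrite Rmax_right by lra. reflexivity. }
  apply cint_conj. auto.
Qed.

Lemma ct_Rmat P x : (forall y, 0 <= y -> mcont0 P y) -> 0 <= x ->
  ct (Rmat (fun s => mopp (ct (P s))) Pzero x) = Rmat Pzero P x.
Proof.
  intros HP Hx.
  assert (Hcc : forall (e1 e2 : M2 -> C), (forall t, cc (fun s => e1 (P (Rmax 0 s))) t) ->
            (forall t, cc (fun s => e2 (P (Rmax 0 s))) t) ->
            forall t, cc (fun s => (e1 (P (Rmax 0 s)) + e2 (P (Rmax 0 s)) - m11 mzero - m11 mzero)%C) t).
  { intros e1 e2 H1 H2 t. apply cc_minus; [apply cc_minus|]; try apply cc_const. apply cc_plus; auto. }
  assert (HA := mcont0_all P HP).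
  rewrite !Rmat_form, Rform_ct. f_equal.
  - unfold theta1.
    rewrite (conj_cint_ext _ (fun s => m12 (P s) + m21 (P s) - m12 (Pzero s) - m21 (Pzero s))%C x); auto.
    + apply Ceq; simpl; ring.
    + apply (Hcc m12 m21); intros t; apply HA.
    + intros s; apply Ceq; unfold Pzero; simpl; ring.
  - unfold theta2.
    rewrite (conj_cint_ext _ (fun s => m11 (P s) + m22 (P s) - m11 (Pzero s) - m22 (Pzero s))%C x); auto.
    + apply Ceq; simpl; ring.
    + apply (Hcc m11 m22); intros t; apply HA.
    + intros s; apply Ceq; unfold Pzero; simpl; ring.
Qed.

Lemma cderiv0_cont f x D : cderiv0 f x D -> filterlim f (within (fun y => 0 <= y) (locally x)) (locally (f x)).
Proof.
  intros H. apply filterlim_locally. intros eps.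
  destruct (proj1 (filterlim_locally _ _) H (mkposreal 1 Rlt_0_1)) as [d1 Hd1].
  set (M := Rabs (fst D) + Rabs (snd D) + 1).
  assert (HM : 0 < M) by (unfold M; generalize (Rabs_pos (fst D)) (Rabs_pos (snd D)); lra).
  assert (Hd : 0 < Rmin d1 (eps / M)) by (apply Rmin_pos; [apply cond_pos|apply Rdiv_lt_0_compat; [apply cond_pos|auto]]).
  exists (mkposreal _ Hd). intros y Hy Hy0. change R in y. rewrite ballR in Hy. simpl in Hy.
  destruct (Req_dec y x) as [->|Hne]. { apply ball_center. }
  assert (Hb : ball x d1 y) by (rewrite ballR; eapply Rlt_le_trans; [exact Hy|apply Rmin_l]).
  specialize (Hd1 y Hb (conj Hy0 Hne)). rewrite ballC in Hd1. simpl in Hd1. destruct Hd1 as [Q1 Q2].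
  assert (Hyx : Rabs (y - x) < eps / M) by (eapply Rlt_le_trans; [exact Hy|apply Rmin_r]).
  assert (Hyx0 : y - x <> 0) by lra.
  assert (Gen : forall a b da c, Rabs (/ (y - x) * (a + - b) + da - c) < 1 -> da = 0 ->
     Rabs c <= Rabs (fst D) + Rabs (snd D) -> Rabs (a - b) < eps).
  { intros a b da c Hq -> Hc. rewrite Rplus_0_r in Hq.
    assert (Hr : Rabs (/ (y - x) * (a + - b)) < M).
    { generalize (Rabs_triang_inv (/ (y - x) * (a + - b)) c). unfold M.
      lra. }
    replace (a - b) with ((y - x) * (/ (y - x) * (a + - b))) by (field; auto).
    rewrite Rabs_mult.
    replace (pos eps) with ((eps / M) * M) by (field; lra).
    apply Rmult_le_0_lt_compat; auto; apply Rabs_pos. }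
  apply ballC. split.
  - eapply Gen. exact Q1. ring. generalize (Rabs_pos (snd D)); lra.
  - eapply Gen. exact Q2. ring. generalize (Rabs_pos (fst D)); lra.
Qed.

Lemma mcont0_of_C1 P : C1_nonneg P -> forall x, 0 <= x -> mcont0 P x.
Proof.
  intros [dP [HdP _]] x Hx e He. eapply cderiv0_cont. apply (HdP x Hx e He).
Qed.

Lemma bc_lemma Q K0 : madd (mmul Q Bm) (mmul Bm Q) = Bm -> mmul (mmul K0 Bm) Q = mzero -> mmul K0 Q = K0.
Proof.
  intros HQ H.
  assert (E : mmul Bm Q = msub Bm (mmul Q Bm)) by (rewrite <- HQ at 2; meq).
  transitivity (madd (mmul K0 Q) (mmul (mmul (mmul K0 Bm) Q) Bm)).
  - rewrite H. meq.
  - rewrite (massoc K0 Bm Q), E. unfold Bm. meq.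
Qed.

Lemma ct_mint (F Fb : R -> M2) x : 0 <= x -> mcall Fb -> (forall y, 0 < y < x -> F y = Fb y) ->
  ct (mint F 0 x) = mint (fun y => ct (F y)) 0 x.
Proof.
  intros Hx HFb HE.
  rewrite (mint_ext F Fb). rewrite (mint_ext (fun y => ct (F y)) (fun y => ct (Fb y))).
  unfold ct. rewrite mint_conjtr; auto.
  all: intros t Ht; rewrite Rmin_left, Rmax_right in Ht by lra; rewrite HE; auto.
Qed.

Theorem corollary2p3
  (P : R -> M2) (Q : M2)
  (HP : C1_nonneg P)
  (HQB : madd (mmul Q Bm) (mmul Bm Q) = Bm)
  (HQQ : mmul Q Q = Q)
  (phi phit S St : C -> R -> M2)
  (Hphi : forall lam, is_sol P Q lam (phi lam))
  (Hphit : forall lam, is_sol_tilde P Q lam (phit lam))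
  (HS : forall lam, is_sol Pzero Q lam (S lam))
  (HSt : forall lam, is_sol_tilde Pzero Q lam (St lam))
  (K : R -> R -> M2) (HK : is_kernel P Pzero Q K)
  (Kt : R -> R -> M2)
  (HKt : is_kernel (fun s => mopp (mconj (mtr (P s)))) Pzero (mconj (mtr Q)) Kt) :
  forall (rho x : R), 0 <= x ->
    let irho := (0, rho) : C in
    (* (1) *)
    S irho x = madd (mmul (Rmat P Pzero x) (phi irho x))
                    (mint (fun y => mmul (K x y) (phi irho y)) 0 x) /\
    mmul (K x 0) Q = K x 0 /\
    (forall dR, mderiv0 (Rmat P Pzero) x dR ->
       msub (mmul (K x x) Bm) (mmul Bm (K x x)) =
       msub (mmul Bm dR) (mmul (Rmat P Pzero x) (P x))) /\
    (* (2) *)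
    St irho x = madd (mmul (phit irho x) (Rmat Pzero P x))
                     (mint (fun y => mmul (phit irho y) (mconj (mtr (Kt x y)))) 0 x) /\
    mmul Q (mconj (mtr (Kt x 0))) = mconj (mtr (Kt x 0)).
Proof.
  intros rho x Hx irho.
  assert (HPc := mcont0_of_C1 P HP).
  destruct HK as [[Kx [Ky [Hcont [Hder Hpde]]]] [Hbc Hdiag]].
  destruct HKt as [[Ktx [Kty [Htcont [Htder Htpde]]]] [Htbc Htdiag]].
  destruct (Hphi irho) as [Hp0 [Hpc Hpd]].
  destruct (HS irho) as [Hs0 [Hsc Hsd]].
  split; [|split; [|split; [|split]]].
  - exact (core P Q rho (phi irho) (S irho) K Kx Ky HPc Hp0 Hpc Hpd Hcont Hder Hpde Hbc Hdiag Hs0 Hsc Hsd x Hx).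
  - exact (bc_lemma Q (K x 0) HQB (Hbc x Hx)).
  - intros dR HdR. rewrite (Hdiag x Hx dR HdR). unfold Pzero. meq.
  - set (P' := fun s => mopp (ct (P s))).
    assert (HP'c : forall y, 0 <= y -> mcont0 P' y) by (intros; apply mcont0_oppct; auto).
    destruct (sol_tilde_ct P P' Q rho (phit irho) (Hphit irho) (fun _ => eq_refl)) as [Hq0 [Hqc Hqd]].
    destruct (sol_tilde_ct Pzero Pzero Q rho (St irho) (HSt irho)) as [Hr0 [Hrc Hrd]].
    { intros; unfold Pzero. rewrite ct_zero. meq. }
    assert (Co := core P' (ct Q) rho (fun t => ct (phit irho t)) (fun t => ct (St irho t)) Kt Ktx Kty
       HP'c Hq0 Hqc Hqd Htcont Htder Htpde Htbc Htdiag Hr0 Hrc Hrd x Hx).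
    simpl in Co. apply (f_equal ct) in Co. rewrite ct_ct, ct_add, ct_mul, ct_ct in Co. unfold P' in Co. rewrite (ct_Rmat P x HPc Hx) in Co.
    rewrite Co. f_equal.
    rewrite (ct_mint _ (fun y => mmul (Kt (pm x y) (Rmax 0 y)) (ct (phit irho (Rmax 0 y))))); auto.
    + f_equal. apply functional_extensionality. intros y. rewrite ct_mul, ct_ct. reflexivity.
    + intros t. apply mc_mul. apply (mc2_mc_snd (fun a b => Kt (pm a b) (Rmax 0 b))).
      apply kernel_mc2. intros a b Hab; apply Htcont; auto.
      apply (mcont0_all (fun t => ct (phit irho t))). auto.
    + intros y Hy. rewrite pm_eq, Rmax0_eq by lra. reflexivity.
  - assert (HQB' : madd (mmul (ct Q) Bm) (mmul Bm (ct Q)) = Bm).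
    { apply (f_equal ct) in HQB. rewrite ct_add, !ct_mul, ct_B in HQB. rewrite <- HQB at 3. meq. }
    assert (E := bc_lemma (ct Q) (Kt x 0) HQB' (Htbc x Hx)).
    apply (f_equal ct) in E. rewrite ct_mul, ct_ct in E. exact E.
Qed.
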